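(* Consider $N$ disturbance-free systems $\dot x_i=f(x_i,u_i)$, $y_i=h(x_i)$ that are iOFP with constant $\sigma$ (i.e., the iOFP inequality holds with $d_i=d_i'=0$), over a connected undirected graph with Laplacian $L$ and incidence matrix $B$ with $E$ edges. Attach to each edge $g$ a system $\dot\eta_g=\psi_g(\eta_g,\varrho_g)$, $v_g=\varphi_g(\eta_g,\varrho_g)$ with input $\varrho_g=\sum_j b_{jg}y_j$, where $\psi_g$ is locally Lipschitz, $\varphi_g$ continuous, and there is a positive definite $\Psi_g$ with $\dot\Psi_g(\eta_g)\le-\varrho_g^\top\varrho_g+v_g^\top\varrho_g$ along solutions. Let $u_i=-\sum_{g=1}^E b_{ig}v_g$. If $\lambda_2>\sigma$, where $\lambda_2$ is the smallest nonzero eigenvalue of $L$, and the closed-loop solution $(x,\eta)$ is bounded, then $\lim_{t\to\infty}\|y_i(t)-\bar y(t)\|=0$ for all $i$, with $\bar y=\frac1N\sum_j y_j$.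
   Context: $x_i\in\mathbb R^n$, $u_i,y_i\in\mathbb R^q$, $f$ locally Lipschitz, $h$ continuously differentiable. iOFP with constant $\sigma\in\mathbb R$ (disturbance-free): there exist continuously differentiable $\Phi:\mathbb R^n\times\mathbb R^n\to\mathbb R_{\ge0}$ and class-$\mathcal K_\infty$ $\underline\alpha,\overline\alpha$ with $\underline\alpha(\|x_i-x_i'\|)\le\Phi(x_i,x_i')\le\overline\alpha(\|x_i-x_i'\|)$ and $\frac{\partial\Phi}{\partial x_i}f(x_i,u_i)+\frac{\partial\Phi}{\partial x_i'}f(x_i',u_i')\le\sigma\|y_i-y_i'\|^2+(y_i-y_i')^\top(u_i-u_i')$ for all arguments. Graph: symmetric nonnegative adjacency $A=[a_{ij}]$, connected; $L=\Delta-A$ with $\Delta=\mathrm{diag}(\sum_j a_{ij})$. Incidence matrix $B\in\mathbb R^{N\times E}$: for the $g$-th edge $(i,j)$, $b_{ig}=-\sqrt{a_{ij}}$, $b_{jg}=\sqrt{a_{ij}}$, other entries zero; $L=BB^\top$. *)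

(* Defs.v *)
From Stdlib Require Import Reals Lra.
From Stdlib Require Vectors.Fin.
Open Scope R_scope.

Definition vec (n : nat) := Fin.t n -> R.

Fixpoint fsum (n : nat) : (Fin.t n -> R) -> R :=
  match n with
  | O => fun _ => 0
  | S m => fun f => f Fin.F1 + fsum m (fun i => f (Fin.FS i))
  end.

Definition vzero (n : nat) : vec n := fun _ => 0.
Definition vadd {n} (v w : vec n) : vec n := fun k => v k + w k.
Definition vsub {n} (v w : vec n) : vec n := fun k => v k - w k.
Definition vscale {n} (c : R) (v : vec n) : vec n := fun k => c * v k.
Definition vopp {n} (v : vec n) : vec n := fun k => - v k.
Definition vsum {n} (m : nat) (F : Fin.t m -> vec n) : vec n :=
  fun k => fsum m (fun j => F j k).
Definition dot {n} (v w : vec n) : R := fsum n (fun k => v k * w k).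
Definition norm {n} (v : vec n) : R := sqrt (dot v v).

Definition mat (q n : nat) := Fin.t q -> Fin.t n -> R.
Definition mvmul {q n} (M : mat q n) (v : vec n) : vec q :=
  fun i => fsum n (fun k => M i k * v k).

Definition loc_lipschitz2 {n m p} (F : vec n -> vec m -> vec p) : Prop :=
  forall x u, exists r K, 0 < r /\
    forall z w z' w',
      norm (vsub z x) + norm (vsub w u) < r ->
      norm (vsub z' x) + norm (vsub w' u) < r ->
      norm (vsub (F z w) (F z' w')) <= K * (norm (vsub z z') + norm (vsub w w')).

Definition continuous2 {n m p} (F : vec n -> vec m -> vec p) : Prop :=
  forall x u eps, 0 < eps -> exists del, 0 < del /\
    forall z w, norm (vsub z x) + norm (vsub w u) < del ->
      norm (vsub (F z w) (F x u)) < eps.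

Definition C1_map {n q} (h : vec n -> vec q) : Prop :=
  exists Dh : vec n -> mat q n,
    (forall x eps, 0 < eps -> exists del, 0 < del /\
       forall v, norm v < del ->
         norm (vsub (vsub (h (vadd x v)) (h x)) (mvmul (Dh x) v)) <= eps * norm v) /\
    (forall x eps, 0 < eps -> exists del, 0 < del /\
       forall z, norm (vsub z x) < del ->
         forall i k, Rabs (Dh z i k - Dh x i k) < eps).

Definition C1_grad2 {n} (Phi : vec n -> vec n -> R) (G1 G2 : vec n -> vec n -> vec n)
  : Prop :=
  (forall x x' eps, 0 < eps -> exists del, 0 < del /\
     forall a b, norm a + norm b < del ->
       Rabs (Phi (vadd x a) (vadd x' b) - Phi x x' - dot (G1 x x') a - dot (G2 x x') b)
         <= eps * (norm a + norm b)) /\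
  (forall x x' eps, 0 < eps -> exists del, 0 < del /\
     forall z z', norm (vsub z x) + norm (vsub z' x') < del ->
       norm (vsub (G1 z z') (G1 x x')) < eps /\ norm (vsub (G2 z z') (G2 x x')) < eps).

Definition class_Kinf (al : R -> R) : Prop :=
  al 0 = 0 /\
  (forall r, 0 <= r -> forall eps, 0 < eps -> exists del, 0 < del /\
     forall s, 0 <= s -> Rabs (s - r) < del -> Rabs (al s - al r) < eps) /\
  (forall r s, 0 <= r -> r < s -> al r < al s) /\
  (forall M, exists r, 0 <= r /\ M <= al r).

Definition iOFP {n q} (f : vec n -> vec q -> vec n) (h : vec n -> vec q)
  (sigma : R) : Prop :=
  exists (Phi : vec n -> vec n -> R) (G1 G2 : vec n -> vec n -> vec n)
         (alo ahi : R -> R),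
    C1_grad2 Phi G1 G2 /\
    (forall x x', 0 <= Phi x x') /\
    class_Kinf alo /\ class_Kinf ahi /\
    (forall x x', alo (norm (vsub x x')) <= Phi x x' <= ahi (norm (vsub x x'))) /\
    (forall x x' u u',
       dot (G1 x x') (f x u) + dot (G2 x x') (f x' u')
       <= sigma * (norm (vsub (h x) (h x')) ^ 2)
          + dot (vsub (h x) (h x')) (vsub u u')).

Definition fin_lt {N} (i j : Fin.t N) : Prop :=
  (proj1_sig (Fin.to_nat i) < proj1_sig (Fin.to_nat j))%nat.

Definition sym_nonneg_adj {N} (a : Fin.t N -> Fin.t N -> R) : Prop :=
  (forall i j, 0 <= a i j) /\ (forall i j, a i j = a j i).

Inductive reach {N} (a : Fin.t N -> Fin.t N -> R) : Fin.t N -> Fin.t N -> Prop :=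
| reach_refl : forall i, reach a i i
| reach_step : forall i k j, 0 < a i k -> reach a k j -> reach a i j.

Definition connected {N} (a : Fin.t N -> Fin.t N -> R) : Prop :=
  forall i j, reach a i j.

Definition laplacian {N} (a : Fin.t N -> Fin.t N -> R) : mat N N :=
  fun i j => (if Fin.eq_dec i j then fsum N (fun k => a i k) else 0) - a i j.

Definition edge_enum {N E} (a : Fin.t N -> Fin.t N -> R)
  (edge : Fin.t E -> Fin.t N * Fin.t N) : Prop :=
  (forall g, fin_lt (fst (edge g)) (snd (edge g)) /\ 0 < a (fst (edge g)) (snd (edge g))) /\
  (forall g g', edge g = edge g' -> g = g') /\
  (forall i j, fin_lt i j -> 0 < a i j -> exists g, edge g = (i, j)).

Definition incidence {N E} (a : Fin.t N -> Fin.t N -> R)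
  (edge : Fin.t E -> Fin.t N * Fin.t N) : mat N E :=
  fun k g =>
    let (i, j) := edge g in
    if Fin.eq_dec k i then - sqrt (a i j)
    else if Fin.eq_dec k j then sqrt (a i j) else 0.

Definition is_eigenvalue {N} (M : mat N N) (lam : R) : Prop :=
  exists v : vec N, (exists k, v k <> 0) /\ mvmul M v = vscale lam v.

Definition smallest_nonzero_eigenvalue {N} (M : mat N N) (lam2 : R) : Prop :=
  is_eigenvalue M lam2 /\ lam2 <> 0 /\
  forall mu, is_eigenvalue M mu -> mu <> 0 -> lam2 <= mu.

Definition pos_def {p} (Psi : vec p -> R) : Prop :=
  Psi (vzero p) = 0 /\ forall eta, (exists k, eta k <> 0) -> 0 < Psi eta.

Definition vderiv {n} (z : R -> vec n) (t : R) (d : vec n) : Prop :=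
  forall k, derivable_pt_lim (fun s => z s k) t (d k).

Definition vcont_at {n} (z : R -> vec n) (t : R) : Prop :=
  forall k, continuity_pt (fun s => z s k) t.

Definition edge_dissipative {p q} (psi : vec p -> vec q -> vec p)
  (phi : vec p -> vec q -> vec q) (Psi : vec p -> R) : Prop :=
  forall (t1 t2 : R) (eta : R -> vec p) (rho : R -> vec q),
    (forall t, t1 < t < t2 -> vcont_at rho t) ->
    (forall t, t1 < t < t2 -> vderiv eta t (psi (eta t) (rho t))) ->
    forall t, t1 < t < t2 ->
      exists D, derivable_pt_lim (fun s => Psi (eta s)) t D /\
        D <= - dot (rho t) (rho t) + dot (phi (eta t) (rho t)) (rho t).

(* Main.v *)
Require Import Defs.
From Stdlib Require Import Reals.
From Stdlib Require Vectors.Fin.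
From Stdlib Require Import Lra Lia FunctionalExtensionality ClassicalEpsilon Classical.
Open Scope R_scope.

Lemma fsum_ext n (f g : Fin.t n -> R) : (forall i, f i = g i) -> fsum n f = fsum n g.
Proof.
  induction n; simpl; intros H; auto.
  rewrite H. f_equal. apply IHn. intros; apply H.
Qed.

Lemma fsum_plus n (f g : Fin.t n -> R) :
  fsum n (fun i => f i + g i) = fsum n f + fsum n g.
Proof. induction n; simpl. lra. rewrite IHn. lra. Qed.

Lemma fsum_scal n c (f : Fin.t n -> R) :
  fsum n (fun i => c * f i) = c * fsum n f.
Proof. induction n; simpl. lra. rewrite IHn. lra. Qed.

Lemma fsum_scalr n c (f : Fin.t n -> R) :
  fsum n (fun i => f i * c) = fsum n f * c.
Proof. induction n; simpl. lra. rewrite IHn. lra. Qed.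

Lemma fsum_opp n (f : Fin.t n -> R) :
  fsum n (fun i => - f i) = - fsum n f.
Proof. induction n; simpl. lra. rewrite IHn. lra. Qed.

Lemma fsum_minus n (f g : Fin.t n -> R) :
  fsum n (fun i => f i - g i) = fsum n f - fsum n g.
Proof. induction n; simpl. lra. rewrite IHn. lra. Qed.

Lemma fsum_const n c : fsum n (fun _ => c) = INR n * c.
Proof. induction n; simpl fsum. simpl; lra. rewrite IHn, S_INR. lra. Qed.

Lemma fsum_zero n (f : Fin.t n -> R) : (forall i, f i = 0) -> fsum n f = 0.
Proof. intros H. rewrite (fsum_ext _ _ (fun _ => 0)); auto. rewrite fsum_const; lra. Qed.

Lemma fsum_le n (f g : Fin.t n -> R) : (forall i, f i <= g i) -> fsum n f <= fsum n g.
Proof.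
  induction n; simpl; intros H. lra.
  pose proof (H Fin.F1). pose proof (IHn (fun i => f (Fin.FS i)) (fun i => g (Fin.FS i)) (fun i => H _)). lra.
Qed.

Lemma fsum_nonneg n (f : Fin.t n -> R) : (forall i, 0 <= f i) -> 0 <= fsum n f.
Proof. intros H. rewrite <- (fsum_zero n (fun _ => 0)); auto. apply fsum_le; auto. Qed.

Lemma fsum_swap n m (F : Fin.t n -> Fin.t m -> R) :
  fsum n (fun i => fsum m (fun j => F i j)) = fsum m (fun j => fsum n (fun i => F i j)).
Proof.
  induction n; simpl.
  - symmetry; apply fsum_zero; auto.
  - rewrite IHn. rewrite <- fsum_plus. reflexivity.
Qed.

Lemma fsum_single n (f : Fin.t n -> R) j0 :
  (forall j, j <> j0 -> f j = 0) -> fsum n f = f j0.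
Proof.
  induction n.
  - inversion j0.
  - intros H. simpl.
    revert H. apply (Fin.caseS' j0).
    + intros H.
      rewrite fsum_zero. lra. intros i; apply H. intro E; inversion E.
    + intros p H. rewrite H. 2:{ intro E; inversion E. }
      rewrite (IHn (fun i => f (Fin.FS i)) p). lra.
      intros j Hj. apply H. intro E. apply Hj. apply Fin.FS_inj; auto.
Qed.

Lemma fsum_abs n (f : Fin.t n -> R) : Rabs (fsum n f) <= fsum n (fun i => Rabs (f i)).
Proof.
  induction n; simpl. rewrite Rabs_R0; lra.
  eapply Rle_trans. apply Rabs_triang. pose proof (IHn (fun i => f (Fin.FS i))). lra.
Qed.

Lemma fsum_ge_term n (f : Fin.t n -> R) j : (forall i, 0 <= f i) -> f j <= fsum n f.
Proof.
  intros H.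
  assert (E: fsum n (fun i => if Fin.eq_dec i j then f i else 0) = f j).
  { rewrite (fsum_single _ _ j). destruct (Fin.eq_dec j j); congruence.
    intros j0 Hj. destruct (Fin.eq_dec j0 j); congruence. }
  rewrite <- E. apply fsum_le. intros i. destruct (Fin.eq_dec i j); auto; lra.
Qed.

Lemma fsum_ge_term' n (f : Fin.t n -> R) j : (forall i, 0 <= f i) -> f j <= fsum n f.
Proof. apply fsum_ge_term. Qed.

Lemma fsum_bound n (f : Fin.t n -> R) C : (forall i, f i <= C) -> fsum n f <= INR n * C.
Proof. intros H. rewrite <- fsum_const. apply fsum_le; auto. Qed.

Lemma fsum_two n (f : Fin.t n -> R) j1 j2 : j1 <> j2 ->
  (forall j, j <> j1 -> j <> j2 -> f j = 0) -> fsum n f = f j1 + f j2.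
Proof.
  intros Hne H.
  rewrite (fsum_ext _ f (fun i => (if Fin.eq_dec i j1 then f i else 0) + (if Fin.eq_dec i j1 then 0 else f i))).
  2:{ intros i; destruct (Fin.eq_dec i j1); lra. }
  rewrite fsum_plus. rewrite (fsum_single _ _ j1), (fsum_single _ _ j2).
  - destruct (Fin.eq_dec j1 j1); [|congruence]. destruct (Fin.eq_dec j2 j1); [congruence|]. lra.
  - intros j Hj. destruct (Fin.eq_dec j j1); auto.
  - intros j Hj. destruct (Fin.eq_dec j j1); congruence.
Qed.

Lemma fsum_mult n m (f : Fin.t n -> R) (g : Fin.t m -> R) :
  fsum n f * fsum m g = fsum n (fun i => fsum m (fun j => f i * g j)).
Proof.
  rewrite <- fsum_scalr. apply fsum_ext; intros i. rewrite fsum_scal. reflexivity.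
Qed.

Lemma fsum_pos_zero n (f : Fin.t n -> R) : (forall i, 0 <= f i) -> fsum n f = 0 -> forall i, f i = 0.
Proof.
  intros H S i. pose proof (fsum_ge_term n f i H). pose proof (H i). lra.
Qed.

Lemma dot_nonneg n (v : vec n) : 0 <= dot v v.
Proof. unfold dot. apply fsum_nonneg. intros; nra. Qed.

Lemma norm_nonneg n (v : vec n) : 0 <= norm v.
Proof. unfold norm. apply sqrt_pos. Qed.

Lemma norm_sq n (v : vec n) : norm v ^ 2 = dot v v.
Proof. unfold norm. simpl. rewrite Rmult_1_r. apply sqrt_sqrt, dot_nonneg. Qed.

Lemma comp_le_norm n (v : vec n) k : Rabs (v k) <= norm v.
Proof.
  unfold norm. rewrite <- sqrt_Rsqr_abs. apply sqrt_le_1_alt.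
  unfold dot. unfold Rsqr. apply (fsum_ge_term n (fun k => v k * v k)). intros; nra.
Qed.

Lemma dot_le_sumabs_sq n (v : vec n) : dot v v <= (fsum n (fun k => Rabs (v k)))^2.
Proof.
  unfold dot. induction n; simpl. lra.
  pose proof (IHn (fun i => v (Fin.FS i))) as H. simpl in H.
  pose proof (fsum_nonneg n (fun i => Rabs (v (Fin.FS i))) (fun i => Rabs_pos _)).
  pose proof (Rabs_pos (v Fin.F1)). 
  assert (v Fin.F1 * v Fin.F1 = Rabs (v Fin.F1) * Rabs (v Fin.F1)).
  { rewrite <- Rabs_mult. rewrite Rabs_right; nra. }
  nra.
Qed.

Lemma norm_le_sumabs n (v : vec n) : norm v <= fsum n (fun k => Rabs (v k)).
Proof.
  unfold norm. rewrite <- (sqrt_pow2 (fsum n (fun k => Rabs (v k)))).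
  apply sqrt_le_1_alt. apply dot_le_sumabs_sq.
  apply fsum_nonneg; intros; apply Rabs_pos.
Qed.

Lemma norm_zero_vec0 (v : vec 0) : norm v = 0.
Proof. unfold norm, dot; simpl. apply sqrt_0. Qed.

Lemma norm_zero_iff n (v : vec n) : norm v = 0 -> forall k, v k = 0.
Proof.
  intros H k. pose proof (comp_le_norm n v k). pose proof (Rabs_pos (v k)).
  destruct (Req_dec (v k) 0); auto. pose proof (Rabs_pos_lt _ H2). lra.
Qed.

Lemma norm_bound_comp n (v : vec n) C : (forall k, Rabs (v k) <= C) -> norm v <= INR n * C.
Proof.
  intros H. eapply Rle_trans. apply norm_le_sumabs. apply fsum_bound; auto.
Qed.

Lemma abs_le x a : Rabs x <= a -> -a <= x <= a.
Proof. unfold Rabs; destruct (Rcase_abs x); lra. Qed.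

Definition Cpt {X : Type} (nb : X -> R -> X -> Prop) (K : X -> Prop) :=
  forall Good : (X -> Prop) -> Prop,
   (forall A B, Good A -> Good B -> Good (fun z => A z \/ B z)) ->
   (forall A B, (forall z, A z -> B z) -> Good B -> Good A) ->
   (forall z, exists r, 0 < r /\ Good (nb z r)) -> Good K.

Definition nbP {X Y} (nbX : X -> R -> X -> Prop) (nbY : Y -> R -> Y -> Prop) :
  X * Y -> R -> X * Y -> Prop :=
  fun p r p' => nbX (fst p) r (fst p') /\ nbY (snd p) r (snd p').

Lemma cpt_prod {X Y} (nbX : X -> R -> X -> Prop) (nbY : Y -> R -> Y -> Prop) KX KY :
  (forall x r r' y, r' <= r -> nbX x r' y -> nbX x r y) ->
  Cpt nbX KX -> Cpt nbY KY -> Cpt (nbP nbX nbY) (fun p => KX (fst p) /\ KY (snd p)).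
Proof.
  intros Hmo HX HY Good U Mo L.
  assert (T: forall x, exists r, 0 < r /\ Good (fun p => nbX x r (fst p) /\ KY (snd p))).
  { intros x.
    apply (HY (fun S => exists r, 0 < r /\ Good (fun p => nbX x r (fst p) /\ S (snd p)))).
    - intros A B [r1 [H1 G1]] [r2 [H2 G2]]. exists (Rmin r1 r2). split.
      apply Rmin_pos; auto.
      eapply Mo. 2: apply (U _ _ G1 G2). simpl. intros p [Hp [Ha|Hb]].
      left. split; auto. eapply Hmo; [apply Rmin_l|]; eauto.
      right. split; auto. eapply Hmo; [apply Rmin_r|]; eauto.
    - intros A B HAB [r [Hr G]]. exists r; split; auto. eapply Mo; [|apply G].
      simpl; intros p [? ?]; split; auto.
    - intros y. destruct (L (x, y)) as [r [Hr G]]. exists r; split; [exact Hr|].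
      exists r; split; [exact Hr|]. eapply Mo; [|apply G]. unfold nbP. simpl. auto. }
  apply (HX (fun S => Good (fun p => S (fst p) /\ KY (snd p)))).
  - intros A B GA GB. eapply Mo; [|apply (U _ _ GA GB)]. simpl. intros p [[Ha|Hb] Hk]; auto.
  - intros A B HAB G. eapply Mo; [|apply G]. simpl. intros p [? ?]; auto.
  - intros x. destruct (T x) as [r [Hr G]]. exists r; auto.
Qed.

Definition nbR (c r c' : R) : Prop := Rabs (c' - c) < r.

Lemma cpt_R M : Cpt nbR (fun c => Rabs c <= M).
Proof.
  intros Good U Mo L.
  destruct (Rlt_or_le M 0) as [HM|HM].
  { destruct (L 0) as [r [Hr G]]. eapply Mo; [|apply G]. intros z Hz.
    pose proof (Rabs_pos z). lra. }
  set (E := fun s => -M <= s <= M /\ Good (fun c => -M <= c <= s)).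
  assert (HE: E (-M)).
  { split. lra. destruct (L (-M)) as [r [Hr G]]. eapply Mo; [|apply G].
    intros c Hc. unfold nbR. replace (c - - M) with 0 by lra. rewrite Rabs_R0; auto. }
  assert (Hb: bound E). { exists M. intros s [Hs _]. lra. }
  destruct (completeness E Hb (ex_intro _ _ HE)) as [s [Hub Hlub]].
  assert (Hs1: -M <= s) by (apply Hub; auto).
  assert (Hs2: s <= M) by (apply Hlub; intros z [Hz _]; lra).
  destruct (L s) as [r [Hr G]].
  assert (He: exists e, E e /\ s - r < e).
  { apply NNPP. intro Hn. assert (s <= s - r).
    { apply Hlub. intros z Hz. destruct (Rle_or_lt z (s - r)); auto. exfalso; apply Hn; eauto. }
    lra. }
  destruct He as [e [[He1 Ge] He2]].
  assert (Hs': E (Rmin M (s + r/2))).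
  { split. split. apply Rmin_glb; lra. apply Rmin_l.
    eapply Mo; [|apply (U _ _ Ge G)]. intros c [Hc1 Hc2].
    destruct (Rle_or_lt c e). left; lra. right. unfold nbR.
    assert (c <= s + r/2) by (eapply Rle_trans; [apply Hc2| apply Rmin_r]).
    apply Rabs_def1; lra. }
  assert (HsM: Rmin M (s + r/2) <= s) by (apply Hub; auto).
  assert (Rmin M (s + r / 2) = M).
  { unfold Rmin in *. destruct (Rle_dec M (s + r/2)); lra. }
  destruct Hs' as [_ Gs]. rewrite H in Gs. eapply Mo; [|apply Gs].
  intros c Hc. destruct (abs_le _ _ Hc). lra.
Qed.

Definition ballv n (z : vec n) (r : R) : vec n -> Prop := fun z' => norm (vsub z' z) < r.
Definition box n (M : R) : vec n -> Prop := fun z => forall k, Rabs (z k) <= M.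

Definition vtail {n} (z : vec (S n)) : vec n := fun i => z (Fin.FS i).
Definition vcons {n} (c : R) (w : vec n) : vec (S n) :=
  fun i => Fin.caseS' i (fun _ => R) c (fun j => w j).

Lemma norm_ext n (v w : vec n) : (forall k, v k = w k) -> norm v = norm w.
Proof. intros H. unfold norm, dot. f_equal. apply fsum_ext. intros; rewrite H; auto. Qed.

Lemma sqrt_le_sum a b : 0 <= b -> sqrt (a * a + b) <= Rabs a + sqrt b.
Proof.
  intros Hb. pose proof (sqrt_pos b). pose proof (Rabs_pos a).
  rewrite <- (sqrt_pow2 (Rabs a + sqrt b)) by lra. apply sqrt_le_1_alt.
  assert (a * a = Rabs a * Rabs a). { rewrite <- Rabs_mult. rewrite Rabs_right; nra. }
  pose proof (sqrt_sqrt b Hb). nra.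
Qed.

Lemma norm_S n (v : vec (S n)) : norm v <= Rabs (v Fin.F1) + norm (vtail v).
Proof.
  unfold norm at 1. unfold dot. simpl. apply sqrt_le_sum. apply dot_nonneg.
Qed.

Lemma norm_S' n (v : vec (S n)) : norm (vtail v) <= norm v.
Proof.
  unfold norm. apply sqrt_le_1_alt. unfold dot at 2. simpl. pose proof (dot_nonneg _ (vtail v)).
  unfold dot, vtail in *. nra.
Qed.

Lemma cpt_vec n M : Cpt (ballv n) (box n M).
Proof.
  induction n.
  - intros Good U Mo L. destruct (L (fun _ => 0)) as [r [Hr G]].
    eapply Mo; [|apply G]. intros z _. unfold ballv. rewrite norm_zero_vec0. auto.
  - intros Good U Mo L.
    pose proof (cpt_prod nbR (ballv n) _ _ (fun x r r' y Hle H => Rlt_le_trans _ _ _ H Hle)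
        (cpt_R M) IHn) as P.
    specialize (P (fun S => Good (fun z => S (z Fin.F1, vtail z)))).
    eapply Mo; [|apply P].
    + intros z Hz. simpl. split. apply Hz. intros k; apply Hz.
    + intros A B GA GB. eapply Mo; [|apply (U _ _ GA GB)]. simpl; auto.
    + intros A B HAB G. eapply Mo; [|apply G]. simpl; auto.
    + intros [c w]. destruct (L (vcons c w)) as [r [Hr G]]. exists (r/2). split. lra.
      eapply Mo; [|apply G]. unfold nbP, nbR, ballv. simpl. intros z [H1 H2].
      eapply Rle_lt_trans. apply norm_S. 
      assert (E: norm (vtail (vsub z (vcons c w))) = norm (vsub (vtail z) w)).
      { apply norm_ext. intros k. reflexivity. }
      rewrite E. simpl. unfold vsub at 1. simpl. lra.
Qed.

Lemma box_of_norm n M (z : vec n) : norm z <= M -> box n M z.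
Proof. intros H k. eapply Rle_trans; [apply comp_le_norm|]; auto. Qed.

Lemma bounded_on_box n (F : vec n -> R) :
  (forall z, exists r, 0 < r /\ exists C, forall z', norm (vsub z' z) < r -> Rabs (F z') <= C) ->
  forall M, exists C, forall z, box n M z -> Rabs (F z) <= C.
Proof.
  intros L M. apply (cpt_vec n M (fun S => exists C, forall z, S z -> Rabs (F z) <= C)).
  - intros A B [C1 H1] [C2 H2]. exists (Rmax C1 C2). intros z [Ha|Hb].
    eapply Rle_trans; [apply H1; auto| apply Rmax_l].
    eapply Rle_trans; [apply H2; auto| apply Rmax_r].
  - intros A B HAB [C H]. exists C; auto.
  - intros z. destruct (L z) as [r [Hr [C HC]]]. exists r; split; auto. exists C. auto.
Qed.

Definition nbV2 n m : vec n * vec m -> R -> vec n * vec m -> Prop := nbP (ballv n) (ballv m).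

Lemma bounded_on_box2 n m (F : vec n -> vec m -> R) :
  (forall z w, exists r, 0 < r /\ exists C, forall z' w',
      norm (vsub z' z) + norm (vsub w' w) < r -> Rabs (F z' w') <= C) ->
  forall M, exists C, forall z w, box n M z -> box m M w -> Rabs (F z w) <= C.
Proof.
  intros L M.
  assert (P := cpt_prod (ballv n) (ballv m) _ _ (fun x r r' y Hle H => Rlt_le_trans _ _ _ H Hle)
        (cpt_vec n M) (cpt_vec m M)).
  destruct (P (fun S => exists C, forall p, S p -> Rabs (F (fst p) (snd p)) <= C)) as [C HC].
  - intros A B [C1 H1] [C2 H2]. exists (Rmax C1 C2). intros z [Ha|Hb].
    eapply Rle_trans; [apply H1; auto| apply Rmax_l].
    eapply Rle_trans; [apply H2; auto| apply Rmax_r].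
  - intros A B HAB [C H]. exists C; auto.
  - intros [z w]. destruct (L z w) as [r [Hr [C HC]]]. exists (r/2); split. lra. exists C.
    intros [z' w'] [H1 H2]. apply HC. unfold ballv in *. simpl in *. lra.
  - exists C. intros z w Hz Hw. apply (HC (z, w)). simpl; auto.
Qed.

Lemma fin_delta n (Q : Fin.t n -> R -> Prop) :
  (forall k, exists d, 0 < d /\ forall s, Rabs s < d -> Q k s) ->
  exists d, 0 < d /\ forall s, Rabs s < d -> forall k, Q k s.
Proof.
  induction n; intros H.
  - exists 1. split. lra. intros s _ k. inversion k.
  - destruct (IHn (fun k s => Q (Fin.FS k) s)) as [d1 [Hd1 H1]]. { intros k; apply H. }
    destruct (H Fin.F1) as [d0 [Hd0 H0]].
    exists (Rmin d0 d1). split. apply Rmin_pos; auto.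
    intros s Hs k. pose proof (Rmin_l d0 d1). pose proof (Rmin_r d0 d1).
    apply (Fin.caseS' k).
    + apply H0. lra.
    + intros p. apply H1. lra.
Qed.

Lemma deriv_approx f t l : derivable_pt_lim f t l ->
  forall eps, 0 < eps -> exists d, 0 < d /\ forall s, Rabs s < d ->
    Rabs (f (t + s) - f t - s * l) <= eps * Rabs s.
Proof.
  intros H eps Heps. destruct (H eps Heps) as [d Hd]. exists d. split. apply cond_pos.
  intros s Hs. destruct (Req_dec s 0) as [E|E].
  - subst. rewrite Rplus_0_r. replace (f t - f t - 0 * l) with 0 by lra. rewrite Rabs_R0. lra.
  - specialize (Hd s E Hs).
    replace (f (t + s) - f t - s * l) with (s * ((f (t + s) - f t) / s - l)) by (field; auto).
    rewrite Rabs_mult. rewrite Rmult_comm. apply Rmult_le_compat_r. apply Rabs_pos. lra.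
Qed.

Lemma vderiv_approx n (z : R -> vec n) t d : vderiv z t d ->
  forall eps, 0 < eps -> exists del, 0 < del /\ forall s, Rabs s < del -> forall k,
    Rabs (z (t + s) k - z t k - s * d k) <= eps * Rabs s.
Proof.
  intros H eps Heps. apply (fin_delta n (fun k s => Rabs (z (t + s) k - z t k - s * d k) <= eps * Rabs s)).
  intros k. apply (deriv_approx (fun s => z s k)); auto.
Qed.

Lemma approx_deriv f t l :
  (forall eps, 0 < eps -> exists d, 0 < d /\ forall s, Rabs s < d ->
    Rabs (f (t + s) - f t - s * l) <= eps * Rabs s) -> derivable_pt_lim f t l.
Proof.
  intros H eps Heps. destruct (H (eps/2)) as [d [Hd H1]]. lra.
  exists (mkposreal d Hd). intros s Hs0 Hs. simpl in Hs. specialize (H1 s Hs).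
  replace ((f (t + s) - f t) / s - l) with ((f (t + s) - f t - s * l) / s) by (field; auto).
  unfold Rdiv. rewrite Rabs_mult, Rabs_inv. pose proof (Rabs_pos_lt s Hs0).
  apply (Rmult_lt_reg_r (Rabs s)); auto. rewrite Rmult_assoc, Rinv_l by lra. nra.
Qed.

Lemma dot_abs n (G w : vec n) e : (forall k, Rabs (w k) <= e) ->
  Rabs (dot G w) <= fsum n (fun k => Rabs (G k)) * e.
Proof.
  intros H. unfold dot. eapply Rle_trans. apply fsum_abs. rewrite <- fsum_scalr.
  apply fsum_le. intros k. rewrite Rabs_mult. apply Rmult_le_compat_l. apply Rabs_pos. auto.
Qed.

Lemma dot_lin n (G a d : vec n) s : dot G a - s * dot G d = dot G (fun k => a k - s * d k).
Proof.
  unfold dot. rewrite <- fsum_scal, <- fsum_minus. apply fsum_ext. intros; ring.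
Qed.

Lemma vadd_vsub n (c z : vec n) : vadd c (vsub z c) = z.
Proof. apply functional_extensionality; intros k. unfold vadd, vsub. ring. Qed.

Lemma fsum_abs_nonneg n (G : vec n) : 0 <= fsum n (fun k => Rabs (G k)).
Proof. apply fsum_nonneg; intros; apply Rabs_pos. Qed.

Lemma approx_norm n (z : R -> vec n) t d s e : e <= 1 ->
  (forall k, Rabs (z (t + s) k - z t k - s * d k) <= e * Rabs s) ->
  norm (vsub (z (t + s)) (z t)) <= Rabs s * fsum n (fun k => Rabs (d k) + 1).
Proof.
  intros He H. eapply Rle_trans. apply norm_le_sumabs. rewrite <- fsum_scal. apply fsum_le.
  intros k. specialize (H k). unfold vsub. pose proof (Rabs_pos s).
  pose proof (Rabs_triang (z (t + s) k - z t k - s * d k) (s * d k)).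
  replace (z (t + s) k - z t k - s * d k + s * d k) with (z (t + s) k - z t k) in H1 by ring.
  rewrite Rabs_mult in H1. pose proof (Rabs_pos (d k)). nra.
Qed.

Lemma chain2 n m (F : vec n -> vec m -> R) (c : vec n) (c' : vec m) (G1 : vec n) (G2 : vec m)
  (z1 : R -> vec n) (z2 : R -> vec m) t d1 d2 :
  (forall eps, 0 < eps -> exists del, 0 < del /\ forall a b, norm a + norm b < del ->
     Rabs (F (vadd c a) (vadd c' b) - F c c' - dot G1 a - dot G2 b) <= eps * (norm a + norm b)) ->
  z1 t = c -> z2 t = c' -> vderiv z1 t d1 -> vderiv z2 t d2 ->
  derivable_pt_lim (fun s => F (z1 s) (z2 s)) t (dot G1 d1 + dot G2 d2).
Proof.
  intros HF E1 E2 D1 D2. apply approx_deriv. intros eps Heps.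
  set (A1 := fsum n (fun k => Rabs (d1 k) + 1)).
  set (A2 := fsum m (fun k => Rabs (d2 k) + 1)).
  set (Gs := fsum n (fun k => Rabs (G1 k)) + fsum m (fun k => Rabs (G2 k)) + 1).
  assert (HA1: 0 <= A1) by (apply fsum_nonneg; intros k; pose proof (Rabs_pos (d1 k)); lra).
  assert (HA2: 0 <= A2) by (apply fsum_nonneg; intros k; pose proof (Rabs_pos (d2 k)); lra).
  pose proof (fsum_abs_nonneg n G1). pose proof (fsum_abs_nonneg m G2).
  assert (HGs: 1 <= Gs) by (unfold Gs; lra).
  set (eps1 := eps / (4 * (A1 + A2 + 1))).
  assert (He1: 0 < eps1) by (unfold eps1; apply Rdiv_lt_0_compat; lra).
  destruct (HF eps1 He1) as [del1 [Hdel1 HF1]].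
  set (eta := Rmin 1 (eps / (4 * Gs))).
  assert (Heta: 0 < eta) by (apply Rmin_pos; [lra| apply Rdiv_lt_0_compat; lra]).
  assert (Heta1: eta <= 1) by apply Rmin_l.
  assert (Heta2: eta <= eps / (4 * Gs)) by apply Rmin_r.
  destruct (vderiv_approx _ _ _ _ D1 eta Heta) as [dl2 [Hdl2 H2]].
  destruct (vderiv_approx _ _ _ _ D2 eta Heta) as [dl3 [Hdl3 H3]].
  exists (Rmin (Rmin dl2 dl3) (del1 / (A1 + A2 + 1))). split.
  { apply Rmin_pos. apply Rmin_pos; auto. apply Rdiv_lt_0_compat; lra. }
  intros s Hs.
  pose proof (Rmin_l (Rmin dl2 dl3) (del1 / (A1 + A2 + 1))).
  pose proof (Rmin_r (Rmin dl2 dl3) (del1 / (A1 + A2 + 1))).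
  pose proof (Rmin_l dl2 dl3). pose proof (Rmin_r dl2 dl3).
  specialize (H2 s ltac:(lra)). specialize (H3 s ltac:(lra)).
  set (a := vsub (z1 (t + s)) c). set (b := vsub (z2 (t + s)) c').
  assert (Na: norm a <= Rabs s * A1). { unfold a. rewrite <- E1. apply (approx_norm _ _ _ _ _ eta); auto. }
  assert (Nb: norm b <= Rabs s * A2). { unfold b. rewrite <- E2. apply (approx_norm _ _ _ _ _ eta); auto. }
  pose proof (Rabs_pos s). pose proof (norm_nonneg _ a). pose proof (norm_nonneg _ b).
  assert (Hab: norm a + norm b < del1).
  { assert (Rabs s * (A1 + A2 + 1) < del1).
    { apply (Rmult_lt_reg_r (/ (A1 + A2 + 1))). apply Rinv_0_lt_compat; lra.
      rewrite Rmult_assoc, Rinv_r by lra. lra. }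
    nra. }
  specialize (HF1 a b Hab).
  assert (Ea: vadd c a = z1 (t + s)) by (unfold a; apply vadd_vsub).
  assert (Eb: vadd c' b = z2 (t + s)) by (unfold b; apply vadd_vsub).
  rewrite Ea, Eb in HF1.
  rewrite E1, E2.
  assert (Q1: Rabs (dot G1 a - s * dot G1 d1) <= fsum n (fun k => Rabs (G1 k)) * (eta * Rabs s)).
  { rewrite dot_lin. apply dot_abs. intros k. unfold a, vsub. rewrite <- E1. auto. }
  assert (Q2: Rabs (dot G2 b - s * dot G2 d2) <= fsum m (fun k => Rabs (G2 k)) * (eta * Rabs s)).
  { rewrite dot_lin. apply dot_abs. intros k. unfold b, vsub. rewrite <- E2. auto. }
  set (X := F (z1 (t + s)) (z2 (t + s)) - F c c' - dot G1 a - dot G2 b) in *.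
  replace (F (z1 (t + s)) (z2 (t + s)) - F c c' - s * (dot G1 d1 + dot G2 d2))
    with (X + (dot G1 a - s * dot G1 d1) + (dot G2 b - s * dot G2 d2)) by (unfold X; ring).
  eapply Rle_trans. apply Rabs_triang. eapply Rle_trans. apply Rplus_le_compat_r. apply Rabs_triang.
  assert (eps1 * (norm a + norm b) <= eps / 4 * Rabs s).
  { apply Rle_trans with (eps1 * (Rabs s * (A1 + A2 + 1))). apply Rmult_le_compat_l; lra.
    unfold eps1. right. field. lra. }
  assert ((fsum n (fun k => Rabs (G1 k)) + fsum m (fun k => Rabs (G2 k))) * (eta * Rabs s) <= eps / 4 * Rabs s).
  { apply Rle_trans with (Gs * (eta * Rabs s)). apply Rmult_le_compat_r. nra. unfold Gs; lra.
    apply Rle_trans with (Gs * (eps / (4 * Gs) * Rabs s)). apply Rmult_le_compat_l. lra.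
    apply Rmult_le_compat_r; lra. right. field. lra. }
  nra.
Qed.

Lemma chain1 n (F : vec n -> R) (c : vec n) (G1 : vec n) (z1 : R -> vec n) t d1 :
  (forall eps, 0 < eps -> exists del, 0 < del /\ forall a, norm a < del ->
     Rabs (F (vadd c a) - F c - dot G1 a) <= eps * norm a) ->
  z1 t = c -> vderiv z1 t d1 ->
  derivable_pt_lim (fun s => F (z1 s)) t (dot G1 d1).
Proof.
  intros HF E1 D1.
  assert (H := chain2 n 0 (fun z _ => F z) c (fun _ => 0) G1 (fun _ => 0) z1 (fun _ => (fun _ => 0)) t d1 (fun _ => 0)).
  replace (dot G1 d1) with (dot G1 d1 + dot (fun _ : Fin.t 0 => 0) (fun _ => 0)) by (unfold dot; simpl; ring).
  apply H; auto.
  - intros eps Heps. destruct (HF eps Heps) as [del [Hd HH]]. exists del; split; auto.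
    intros a b Hab. rewrite (norm_zero_vec0 b) in *. unfold dot at 2; simpl.
    rewrite Rplus_0_r in *. rewrite Rminus_0_r. auto.
  - intros k. inversion k.
Qed.

Lemma fsum_deriv n (F : Fin.t n -> R -> R) (D : Fin.t n -> R) t :
  (forall j, derivable_pt_lim (F j) t (D j)) ->
  derivable_pt_lim (fun s => fsum n (fun j => F j s)) t (fsum n D).
Proof.
  induction n; intros H; simpl.
  - apply derivable_pt_lim_const.
  - apply (derivable_pt_lim_plus (F Fin.F1) (fun s => fsum n (fun j => F (Fin.FS j) s))).
    apply H. apply (IHn (fun j => F (Fin.FS j)) (fun j => D (Fin.FS j))). intros; apply H.
Qed.

Lemma deriv_cont f t l : derivable_pt_lim f t l -> continuity_pt f t.
Proof. intros H. apply derivable_continuous_pt. exists l. exact H. Qed.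

Lemma mvt_gen (F : R -> R) (P : R -> Prop) a' a b b' :
  a' < a -> a < b -> b < b' ->
  (forall s, a' < s < b' -> exists D, derivable_pt_lim F s D /\ P D) ->
  exists D, P D /\ F b - F a = D * (b - a).
Proof.
  intros H1 H2 H3 H.
  set (f' := fun s => epsilon (inhabits 0) (fun D => derivable_pt_lim F s D /\ P D)).
  assert (Hf: forall s, a' < s < b' -> derivable_pt_lim F s (f' s) /\ P (f' s)).
  { intros s Hs. unfold f'. apply (epsilon_spec (inhabits 0) (fun D => derivable_pt_lim F s D /\ P D)). auto. }
  destruct (MVT_cor2 F f' a b H2) as [c [Hc1 Hc2]].
  { intros c Hc. apply Hf. lra. }
  exists (f' c). split. apply Hf; lra. lra.
Qed.

Lemma decr_gen (F : R -> R) a' a b b' k :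
  a' < a -> a <= b -> b < b' ->
  (forall s, a' < s < b' -> exists D, derivable_pt_lim F s D /\ D <= - k) ->
  F b - F a <= - k * (b - a).
Proof.
  intros H1 H2 H3 H. destruct (Req_dec a b). subst. lra.
  destruct (mvt_gen F (fun D => D <= -k) a' a b b') as [D [HD E]]; auto. lra. rewrite E.
  apply Rmult_le_compat_r; lra.
Qed.

Lemma lip_gen (F : R -> R) a' a b b' K :
  a' < a -> a <= b -> b < b' ->
  (forall s, a' < s < b' -> exists D, derivable_pt_lim F s D /\ Rabs D <= K) ->
  Rabs (F b - F a) <= K * (b - a).
Proof.
  intros H1 H2 H3 H. destruct (Req_dec a b). subst. replace (F b - F b) with 0 by ring.
  rewrite Rabs_R0; lra.
  destruct (mvt_gen F (fun D => Rabs D <= K) a' a b b') as [D [HD E]]; auto. lra. rewrite E.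
  rewrite Rabs_mult. rewrite (Rabs_right (b - a)) by lra.
  apply Rmult_le_compat_r; lra.
Qed.

Lemma fin_lt_irrefl N (i : Fin.t N) : ~ fin_lt i i.
Proof. unfold fin_lt. lia. Qed.

Lemma fin_lt_ne N (i j : Fin.t N) : fin_lt i j -> i <> j.
Proof. intros H E. subst. eapply fin_lt_irrefl; eauto. Qed.

Lemma fin_lt_dec N (i j : Fin.t N) : {fin_lt i j} + {~ fin_lt i j}.
Proof. unfold fin_lt. apply Compare_dec.lt_dec. Qed.

Arguments fin_lt_dec {N}.

Lemma fin_trich N (i j : Fin.t N) : ~ fin_lt i j -> ~ fin_lt j i -> i = j.
Proof. unfold fin_lt. intros H1 H2. apply Fin.to_nat_inj. lia. Qed.

Definition Bt {N E} (B : mat N E) (z : vec N) (g : Fin.t E) : R :=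
  fsum N (fun j => B j g * z j).

Section Inc.
Variables (N E : nat) (a : Fin.t N -> Fin.t N -> R) (edge : Fin.t E -> Fin.t N * Fin.t N).
Hypothesis Hadj : sym_nonneg_adj a.
Hypothesis Hedge : edge_enum a edge.

Lemma Bt_form z g : Bt (incidence a edge) z g =
  sqrt (a (fst (edge g)) (snd (edge g))) * (z (snd (edge g)) - z (fst (edge g))).
Proof.
  destruct Hedge as [H1 _]. specialize (H1 g).
  unfold Bt, incidence. destruct (edge g) as [i j] eqn:Eg. simpl in *.
  destruct H1 as [Hlt _]. pose proof (fin_lt_ne _ _ _ Hlt) as Hne.
  rewrite (fsum_two _ _ i j Hne).
  - destruct (Fin.eq_dec i i); [|congruence]. destruct (Fin.eq_dec j i); [congruence|].
    destruct (Fin.eq_dec j j); [|congruence]. ring.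
  - intros k Hk1 Hk2. destruct (Fin.eq_dec k i); [congruence|]. destruct (Fin.eq_dec k j); [congruence|]. ring.
Qed.

Lemma colsum g : fsum N (fun j => incidence a edge j g) = 0.
Proof.
  transitivity (Bt (incidence a edge) (fun _ => 1) g).
  unfold Bt. apply fsum_ext. intros; ring. rewrite Bt_form. ring.
Qed.

Lemma reindex (Hf : Fin.t N -> Fin.t N -> R) :
  (forall i j, Hf i j <> 0 -> exists g, edge g = (i, j)) ->
  fsum E (fun g => Hf (fst (edge g)) (snd (edge g))) = fsum N (fun i => fsum N (fun j => Hf i j)).
Proof.
  intros Him. destruct Hedge as [_ [Hinj _]].
  set (X := fun i j g => if Fin.eq_dec i (fst (edge g)) then if Fin.eq_dec j (snd (edge g)) then Hf i j else 0 else 0).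
  transitivity (fsum N (fun i => fsum N (fun j => fsum E (fun g => X i j g)))).
  - symmetry.
    rewrite (fsum_ext N _ (fun i => fsum E (fun g => fsum N (fun j => X i j g)))) by (intros; apply fsum_swap).
    rewrite fsum_swap. apply fsum_ext. intros g.
    rewrite (fsum_single _ _ (fst (edge g))).
    + rewrite (fsum_single _ _ (snd (edge g))).
      * unfold X. destruct (Fin.eq_dec _ _); [|congruence]. destruct (Fin.eq_dec _ _); congruence.
      * intros j Hj. unfold X. destruct (Fin.eq_dec _ _); [|auto]. destruct (Fin.eq_dec _ _); congruence.
    + intros i Hi. apply fsum_zero. intros j. unfold X. destruct (Fin.eq_dec _ _); congruence.
  - apply fsum_ext; intros i. apply fsum_ext; intros j.
    destruct (Req_dec (Hf i j) 0) as [Z|Z].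
    + rewrite Z. apply fsum_zero. intros g. unfold X. destruct (Fin.eq_dec _ _); auto. destruct (Fin.eq_dec _ _); auto.
    + destruct (Him i j Z) as [g0 Hg0]. rewrite (fsum_single _ _ g0).
      * unfold X. rewrite Hg0. simpl. destruct (Fin.eq_dec i i); [|congruence]. destruct (Fin.eq_dec j j); congruence.
      * intros g Hg. unfold X. destruct (Fin.eq_dec _ _); auto. destruct (Fin.eq_dec _ _); auto.
        exfalso. apply Hg. apply Hinj. rewrite Hg0. destruct (edge g); simpl in *; subst; auto.
Qed.

Definition Hq (z w : vec N) (i j : Fin.t N) : R := a i j * (z j - z i) * (w j - w i).

Lemma bil_reindex z w :
  fsum E (fun g => Bt (incidence a edge) z g * Bt (incidence a edge) w g) =
  fsum N (fun i => fsum N (fun j => if fin_lt_dec i j then Hq z w i j else 0)).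
Proof.
  rewrite <- reindex.
  - apply fsum_ext. intros g. rewrite !Bt_form.
    destruct Hedge as [H1 _]. destruct (H1 g) as [Hlt Hpos].
    destruct (fin_lt_dec _ _); [|contradiction]. unfold Hq.
    pose proof (sqrt_sqrt (a (fst (edge g)) (snd (edge g))) ltac:(lra)).
    replace (sqrt (a (fst (edge g)) (snd (edge g))) * (z (snd (edge g)) - z (fst (edge g))) *
       (sqrt (a (fst (edge g)) (snd (edge g))) * (w (snd (edge g)) - w (fst (edge g)))))
    with (sqrt (a (fst (edge g)) (snd (edge g))) * sqrt (a (fst (edge g)) (snd (edge g))) *
       (z (snd (edge g)) - z (fst (edge g))) * (w (snd (edge g)) - w (fst (edge g)))) by ring.
    rewrite H. ring.
  - intros i j Hne. destruct (fin_lt_dec i j) as [Hl|Hl]; [|congruence].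
    destruct Hedge as [_ [_ H3]]. apply H3; auto. unfold Hq in Hne.
    destruct Hadj as [Hnn _]. specialize (Hnn i j). destruct Hnn; auto.
    exfalso; apply Hne. rewrite <- H. ring.
Qed.

Lemma sym_half z w :
  fsum N (fun i => fsum N (fun j => Hq z w i j)) =
  2 * fsum N (fun i => fsum N (fun j => if fin_lt_dec i j then Hq z w i j else 0)).
Proof.
  destruct Hadj as [_ Hsym].
  transitivity (fsum N (fun i => fsum N (fun j => (if fin_lt_dec i j then Hq z w i j else 0)
      + (if fin_lt_dec j i then Hq z w i j else 0)))).
  - apply fsum_ext; intros i; apply fsum_ext; intros j.
    destruct (fin_lt_dec i j) as [H1|H1]; destruct (fin_lt_dec j i) as [H2|H2].
    + exfalso. unfold fin_lt in *. lia.
    + ring. + ring.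
    + rewrite (fin_trich _ _ _ H1 H2). unfold Hq. ring.
  - rewrite (fsum_ext N _ (fun i => fsum N (fun j => if fin_lt_dec i j then Hq z w i j else 0) +
       fsum N (fun j => if fin_lt_dec j i then Hq z w i j else 0))).
    2:{ intros i. apply fsum_plus. }
    rewrite fsum_plus. rewrite (fsum_swap N N (fun i j => if fin_lt_dec j i then Hq z w i j else 0)).
    assert (fsum N (fun j => fsum N (fun i => if fin_lt_dec j i then Hq z w i j else 0)) =
            fsum N (fun i => fsum N (fun j => if fin_lt_dec i j then Hq z w i j else 0))).
    { apply fsum_ext; intros i; apply fsum_ext; intros j. destruct (fin_lt_dec i j); auto.
      unfold Hq. rewrite Hsym. ring. }
    rewrite H. ring.
Qed.

Definition deg (i : Fin.t N) := fsum N (fun k => a i k).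

Lemma lap_apply w i : mvmul (laplacian a) w i = deg i * w i - fsum N (fun j => a i j * w j).
Proof.
  unfold mvmul, laplacian. 
  rewrite (fsum_ext _ _ (fun k => (if Fin.eq_dec i k then fsum N (fun k0 => a i k0) * w k else 0) - a i k * w k)).
  2:{ intros k. destruct (Fin.eq_dec i k); ring. }
  rewrite fsum_minus. rewrite (fsum_single _ _ i).
  - destruct (Fin.eq_dec i i); [|congruence]. reflexivity.
  - intros j Hj. destruct (Fin.eq_dec i j); congruence.
Qed.

Lemma full_sum z w :
  fsum N (fun i => fsum N (fun j => Hq z w i j)) = 2 * fsum N (fun i => z i * mvmul (laplacian a) w i).
Proof.
  destruct Hadj as [_ Hsym].
  unfold Hq.
  rewrite (fsum_ext N _ (fun i => fsum N (fun j => a i j * z j * w j) - fsum N (fun j => a i j * z j * w i)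
        - fsum N (fun j => a i j * z i * w j) + fsum N (fun j => a i j * z i * w i))).
  2:{ intros i. rewrite <- !fsum_minus, <- fsum_plus. apply fsum_ext. intros; ring. }
  rewrite fsum_plus, !fsum_minus.
  assert (E1: fsum N (fun i => fsum N (fun j => a i j * z j * w j)) = fsum N (fun i => fsum N (fun j => a i j * z i * w i))).
  { rewrite fsum_swap. apply fsum_ext; intros i; apply fsum_ext; intros j. rewrite Hsym. ring. }
  assert (E2: fsum N (fun i => fsum N (fun j => a i j * z j * w i)) = fsum N (fun i => fsum N (fun j => a i j * z i * w j))).
  { rewrite fsum_swap. apply fsum_ext; intros i; apply fsum_ext; intros j. rewrite Hsym. ring. }
  rewrite E1, E2.
  rewrite <- fsum_scal.
  rewrite (fsum_ext N (fun i => 2 * (z i * mvmul (laplacian a) w i))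
     (fun i => 2 * (fsum N (fun j => a i j * z i * w i)) - 2 * fsum N (fun j => a i j * z i * w j))).
  2:{ intros i. rewrite lap_apply. unfold deg.
      rewrite (fsum_ext N (fun j => a i j * z i * w i) (fun j => a i j * (z i * w i))) by (intros; ring).
      rewrite fsum_scalr.
      rewrite (fsum_ext N (fun j => a i j * z i * w j) (fun j => z i * (a i j * w j))) by (intros; ring).
      rewrite fsum_scal. change (fsum N (a i)) with (fsum N (fun k => a i k)). ring. }
  rewrite fsum_minus, !fsum_scal. ring.
Qed.

Lemma bil_lap z w :
  fsum E (fun g => Bt (incidence a edge) z g * Bt (incidence a edge) w g) =
  fsum N (fun i => z i * mvmul (laplacian a) w i).
Proof.
  rewrite bil_reindex. pose proof (sym_half z w). pose proof (full_sum z w). lra.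
Qed.

End Inc.

Definition contv {n} (F : vec n -> R) (z : vec n) : Prop :=
  forall eps, 0 < eps -> exists r, 0 < r /\ forall z', norm (vsub z' z) < r -> Rabs (F z' - F z) < eps.

Lemma contv_const n c (z : vec n) : contv (fun _ => c) z.
Proof. intros eps He. exists 1. split. lra. intros. replace (c - c) with 0 by ring. rewrite Rabs_R0; lra. Qed.

Lemma contv_coord n k (z : vec n) : contv (fun v => v k) z.
Proof.
  intros eps He. exists eps. split. auto. intros z' H. eapply Rle_lt_trans; [|apply H].
  apply (comp_le_norm n (vsub z' z) k).
Qed.

Lemma contv_plus n F G (z : vec n) : contv F z -> contv G z -> contv (fun v => F v + G v) z.
Proof.
  intros HF HG eps He. destruct (HF (eps/2)) as [r1 [H1 F1]]. lra. destruct (HG (eps/2)) as [r2 [H2 G2]]. lra.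
  exists (Rmin r1 r2). split. apply Rmin_pos; auto. intros z' Hz.
  specialize (F1 z' (Rlt_le_trans _ _ _ Hz (Rmin_l _ _))). specialize (G2 z' (Rlt_le_trans _ _ _ Hz (Rmin_r _ _))).
  replace (F z' + G z' - (F z + G z)) with ((F z' - F z) + (G z' - G z)) by ring.
  eapply Rle_lt_trans. apply Rabs_triang. lra.
Qed.

Lemma contv_mult n F G (z : vec n) : contv F z -> contv G z -> contv (fun v => F v * G v) z.
Proof.
  intros HF HG eps He.
  set (A := Rabs (F z) + 1). set (Bb := Rabs (G z) + 1).
  assert (HA: 1 <= A) by (unfold A; pose proof (Rabs_pos (F z)); lra).
  assert (HB: 1 <= Bb) by (unfold Bb; pose proof (Rabs_pos (G z)); lra).
  set (e1 := Rmin 1 (eps / (2 * Bb))). set (e2 := eps / (2 * (A + 1))).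
  assert (He1: 0 < e1) by (apply Rmin_pos; [lra| apply Rdiv_lt_0_compat; lra]).
  assert (He2: 0 < e2) by (apply Rdiv_lt_0_compat; lra).
  destruct (HF e1 He1) as [r1 [H1 F1]]. destruct (HG e2 He2) as [r2 [H2 G2]].
  exists (Rmin r1 r2). split. apply Rmin_pos; auto. intros z' Hz.
  specialize (F1 z' (Rlt_le_trans _ _ _ Hz (Rmin_l _ _))). specialize (G2 z' (Rlt_le_trans _ _ _ Hz (Rmin_r _ _))).
  replace (F z' * G z' - F z * G z) with (F z' * (G z' - G z) + (F z' - F z) * G z) by ring.
  eapply Rle_lt_trans. apply Rabs_triang. rewrite !Rabs_mult.
  assert (Rabs (F z') <= A).
  { unfold A. pose proof (Rabs_triang (F z' - F z) (F z)). replace (F z' - F z + F z) with (F z') in H by ring.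
    pose proof (Rmin_l 1 (eps / (2 * Bb))). fold e1 in H0. lra. }
  assert (e1 <= eps / (2 * Bb)) by apply Rmin_r.
  assert (Rabs (G z) <= Bb) by (unfold Bb; lra).
  assert (Rabs (F z') * Rabs (G z' - G z) <= A * e2).
  { apply Rmult_le_compat; try apply Rabs_pos; lra. }
  assert (Rabs (F z' - F z) * Rabs (G z) <= e1 * Bb).
  { apply Rmult_le_compat; try apply Rabs_pos; lra. }
  assert (A * e2 < eps / 2).
  { unfold e2. apply (Rmult_lt_reg_r (2 * (A + 1))). lra. unfold Rdiv. 
    replace (A * (eps * / (2 * (A + 1))) * (2 * (A + 1))) with (A * eps) by (field; lra). nra. }
  assert (e1 * Bb <= eps / 2).
  { apply Rle_trans with (eps / (2 * Bb) * Bb). apply Rmult_le_compat_r; lra. right. field. lra. }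
  lra.
Qed.

Lemma contv_fsum n m (F : Fin.t m -> vec n -> R) (z : vec n) :
  (forall j, contv (F j) z) -> contv (fun v => fsum m (fun j => F j v)) z.
Proof.
  induction m; intros H; simpl.
  - apply contv_const.
  - apply (contv_plus n (F Fin.F1) (fun v => fsum m (fun j => F (Fin.FS j) v))). apply H.
    apply (IHm (fun j => F (Fin.FS j))). intros; apply H.
Qed.

Lemma quad_zero b c : (forall t, 0 <= 2 * t * b + t * t * c) -> b = 0.
Proof.
  intros H. destruct (Req_dec b 0) as [|Hb0]; auto. exfalso.
  set (t := - b / (Rabs c + 1)). specialize (H t). pose proof (Rabs_pos c).
  assert (c <= Rabs c) by apply Rle_abs.
  assert (Ht: t * (Rabs c + 1) = - b) by (unfold t; field; lra).
  assert (0 < b * b) by (pose proof (Rsqr_pos_lt b Hb0); unfold Rsqr in *; lra).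
  assert (t * t * c <= t * t * Rabs c) by (apply Rmult_le_compat_l; nra).
  assert (2 * t * b + t * t * Rabs c < 0).
  { assert (t * t * (Rabs c + 1) = - b * t) by (rewrite <- Ht; ring).
    assert (t <> 0). { intro E. rewrite E in Ht. lra. }
    assert (0 < t * t) by nra. nra. }
  lra.
Qed.

Lemma fin_pos n (k : Fin.t n) : (0 < n)%nat.
Proof. destruct k; lia. Qed.

Section Spec.
Variables (N E : nat) (a : Fin.t N -> Fin.t N -> R) (edge : Fin.t E -> Fin.t N * Fin.t N) (lam2 : R).
Hypothesis Hadj : sym_nonneg_adj a.
Hypothesis Hcon : connected a.
Hypothesis Hedge : edge_enum a edge.
Hypothesis Hlam : smallest_nonzero_eigenvalue (laplacian a) lam2.

Let B := incidence a edge.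
Definition Qf (z : vec N) := fsum E (fun g => Bt B z g * Bt B z g).
Definition Kset (z : vec N) := dot z z = 1 /\ fsum N z = 0.

Lemma Qf_nonneg z : 0 <= Qf z.
Proof. apply fsum_nonneg. intros; nra. Qed.

Lemma Bt_lin z w t g : Bt B (fun k => z k + t * w k) g = Bt B z g + t * Bt B w g.
Proof. unfold Bt. rewrite <- fsum_scal, <- fsum_plus. apply fsum_ext. intros; ring. Qed.

Lemma Bt_scal z c g : Bt B (fun k => c * z k) g = c * Bt B z g.
Proof. unfold Bt. rewrite <- fsum_scal. apply fsum_ext. intros; ring. Qed.

Lemma Qf_cont z : contv Qf z.
Proof.
  unfold Qf. apply contv_fsum. intros g. apply contv_mult; unfold Bt; apply contv_fsum; intros j;
  apply contv_mult; first [apply contv_const|apply contv_coord].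
Qed.

Lemma dot_cont z : contv (fun v : vec N => dot v v) z.
Proof. unfold dot. apply contv_fsum. intros; apply contv_mult; apply contv_coord. Qed.

Lemma sum_cont z : contv (fun v : vec N => fsum N v) z.
Proof. apply (contv_fsum N N (fun j v => v j)). intros; apply contv_coord. Qed.

Lemma K_box z : Kset z -> box N 1 z.
Proof.
  intros [H _]. apply box_of_norm. unfold norm. rewrite H, sqrt_1. lra.
Qed.

Lemma not_contv_sep (F : vec N -> R) z c : contv F z -> F z <> c ->
  exists r, 0 < r /\ forall z', norm (vsub z' z) < r -> F z' <> c.
Proof.
  intros H Hne. destruct (H (Rabs (F z - c))) as [r [Hr Hr']].
  apply Rabs_pos_lt. lra. exists r. split; auto. intros z' Hz Ez. specialize (Hr' z' Hz).
  rewrite Ez in Hr'. rewrite Rabs_minus_sym in Hr'. lra.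
Qed.

Lemma min_attained : (exists w, Kset w) -> exists w, Kset w /\ forall v, Kset v -> Qf w <= Qf v.
Proof.
  intros [w0 Hw0].
  set (Es := fun r => exists w, Kset w /\ r = - Qf w).
  assert (Hb: bound Es). { exists 0. intros r [w [_ Er]]. subst. pose proof (Qf_nonneg w). lra. }
  destruct (completeness Es Hb (ex_intro _ (- Qf w0) (ex_intro _ w0 (conj Hw0 eq_refl)))) as [l [Hub Hlub]].
  set (m := - l).
  assert (Hm1: forall w, Kset w -> m <= Qf w).
  { intros w Hw. assert (- Qf w <= l) by (apply Hub; exists w; auto). unfold m; lra. }
  assert (Hm2: forall e, 0 < e -> exists w, Kset w /\ Qf w < m + e).
  { intros e He. apply NNPP. intros Hn. assert (l <= l - e).
    { apply Hlub. intros r [w [Hw Er]]. subst. destruct (Rle_or_lt (- Qf w) (l - e)); auto.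
      exfalso. apply Hn. exists w. split; auto. unfold m; lra. }
    lra. }
  apply NNPP. intros Hn.
  assert (Hgt: forall w, Kset w -> m < Qf w).
  { intros w Hw. destruct (Rle_lt_or_eq_dec _ _ (Hm1 w Hw)) as [H|H]; auto.
    exfalso. apply Hn. exists w. split; auto. intros v Hv. rewrite <- H. auto. }
  destruct (cpt_vec N 1 (fun S => exists C, forall z, S z -> Kset z -> / (Qf z - m) <= C)) as [C HC].
  - intros A0 B0 [C1 H1] [C2 H2]. exists (Rmax C1 C2). intros z [Ha|Hb'] Hk.
    eapply Rle_trans; [apply H1; auto| apply Rmax_l].
    eapply Rle_trans; [apply H2; auto| apply Rmax_r].
  - intros A0 B0 HAB [C H]. exists C; auto.
  - intros z. destruct (classic (Kset z)) as [Hk|Hk].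
    + pose proof (Hgt z Hk). destruct (Qf_cont z ((Qf z - m)/2)) as [r [Hr Hr']]. lra.
      exists r. split; auto. exists (2 / (Qf z - m)). intros z' Hz' _.
      specialize (Hr' z' Hz'). destruct (abs_le (Qf z' - Qf z) ((Qf z - m)/2)) as [Hl _]. lra.
      assert (0 < Qf z' - m) by lra.
      apply Rle_trans with (/ ((Qf z - m) / 2)).
      apply Rinv_le_contravar; lra. right. field. lra.
    + unfold Kset in Hk. apply not_and_or in Hk. destruct Hk as [Hk|Hk].
      * destruct (not_contv_sep _ _ _ (dot_cont z) Hk) as [r [Hr Hr']]. exists r. split; auto.
        exists 0. intros z' Hz' [Hk' _]. exfalso. apply (Hr' z'); auto.
      * destruct (not_contv_sep _ _ _ (sum_cont z) Hk) as [r [Hr Hr']]. exists r. split; auto.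
        exists 0. intros z' Hz' [_ Hk']. exfalso. apply (Hr' z'); auto.
  - destruct (Hm2 (/ (Rabs C + 1))) as [w [Hw Hq]]. apply Rinv_0_lt_compat. pose proof (Rabs_pos C); lra.
    specialize (HC w (K_box w Hw) Hw). pose proof (Hgt w Hw).
    pose proof (Rabs_pos C). assert (C <= Rabs C) by apply Rle_abs.
    assert (Rabs C + 1 < / (Qf w - m)).
    { rewrite <- (Rinv_inv (Rabs C + 1)). apply Rinv_lt_contravar.
      apply Rmult_lt_0_compat. lra. apply Rinv_0_lt_compat; lra. lra. }
    lra.
Qed.

Lemma dot_scal c (z : vec N) : dot (fun k => c * z k) (fun k => c * z k) = c * c * dot z z.
Proof. unfold dot. rewrite <- fsum_scal. apply fsum_ext. intros; ring. Qed.

Lemma Qf_scal c z : Qf (fun k => c * z k) = c * c * Qf z.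
Proof. unfold Qf. rewrite <- fsum_scal. apply fsum_ext. intros g. rewrite Bt_scal. ring. Qed.

Lemma fsum_vscal c (z : vec N) : fsum N (fun k => c * z k) = c * fsum N z.
Proof. apply fsum_scal. Qed.

Lemma normalize z : fsum N z = 0 -> dot z z <> 0 ->
  Kset (fun k => / sqrt (dot z z) * z k) /\
  Qf (fun k => / sqrt (dot z z) * z k) * dot z z = Qf z.
Proof.
  intros H0 Hd. pose proof (dot_nonneg N z).
  assert (Hs: 0 < sqrt (dot z z)) by (apply sqrt_lt_R0; lra).
  pose proof (sqrt_sqrt (dot z z) H).
  split. split.
  - rewrite dot_scal. rewrite <- H1 at 3. field. lra.
  - rewrite fsum_vscal, H0. ring.
  - rewrite Qf_scal. rewrite <- H1 at 3. field. lra.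
Qed.

Lemma Qf_lower w : Kset w -> (forall v, Kset v -> Qf w <= Qf v) ->
  forall v, fsum N v = 0 -> Qf w * dot v v <= Qf v.
Proof.
  intros Hw Hmin v Hv. destruct (Req_dec (dot v v) 0) as [E0|E0].
  - rewrite E0. pose proof (Qf_nonneg v). lra.
  - destruct (normalize v Hv E0) as [Hk Hq]. specialize (Hmin _ Hk).
    rewrite <- Hq. apply Rmult_le_compat_r. apply dot_nonneg. auto.
Qed.

Lemma Qf_quad w z t : Qf (fun k => w k + t * z k) =
  Qf w + 2 * t * fsum E (fun g => Bt B w g * Bt B z g) + t * t * Qf z.
Proof.
  unfold Qf. rewrite (fsum_ext E _ (fun g => Bt B w g * Bt B w g + (2 * t * (Bt B w g * Bt B z g) + t * t * (Bt B z g * Bt B z g)))).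
  rewrite !fsum_plus, !fsum_scal. ring.
  intros g. rewrite Bt_lin. ring.
Qed.

Lemma dot_quad (w z : vec N) t : dot (fun k => w k + t * z k) (fun k => w k + t * z k) =
  dot w w + 2 * t * dot w z + t * t * dot z z.
Proof.
  unfold dot. rewrite (fsum_ext N _ (fun k => w k * w k + (2 * t * (w k * z k) + t * t * (z k * z k)))).
  rewrite !fsum_plus, !fsum_scal. ring. intros; ring.
Qed.

Lemma Bt_one g : Bt B (fun _ => 1) g = 0.
Proof.
  unfold Bt. rewrite <- (colsum N E a edge Hedge g). apply fsum_ext. intros; unfold B; ring.
Qed.

Lemma is_eig w : Kset w -> (forall v, Kset v -> Qf w <= Qf v) ->
  mvmul (laplacian a) w = vscale (Qf w) w.
Proof.
  intros Hw Hmin. set (mu := Qf w).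
  assert (Hbeta: forall z, fsum N z = 0 -> fsum E (fun g => Bt B w g * Bt B z g) - mu * dot w z = 0).
  { intros z Hz. apply (quad_zero _ (Qf z - mu * dot z z)). intros t.
    assert (fsum N (fun k => w k + t * z k) = 0).
    { rewrite fsum_plus, fsum_scal. destruct Hw as [_ Hw]. rewrite Hw, Hz. ring. }
    pose proof (Qf_lower w Hw Hmin _ H). rewrite Qf_quad, dot_quad in H0.
    destruct Hw as [Hw1 _]. rewrite Hw1 in H0. unfold mu. nra. }
  set (r := fun i => mvmul (laplacian a) w i - mu * w i).
  assert (Hr: fsum N r = 0).
  { unfold r. rewrite fsum_minus, fsum_scal. destruct Hw as [_ Hw]. rewrite Hw.
    pose proof (bil_lap N E a edge Hadj Hedge (fun _ => 1) w).
    rewrite (fsum_zero E) in H. 2:{ intros g. fold B. rewrite Bt_one. ring. }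
    rewrite (fsum_ext N _ (fun i => 1 * mvmul (laplacian a) w i)) by (intros; ring). lra. }
  specialize (Hbeta r Hr).
  assert (Hrr: dot r r = 0).
  { rewrite <- Hbeta. rewrite (fsum_ext E _ (fun g => Bt B r g * Bt B w g)) by (intros; ring).
    unfold B. rewrite (bil_lap N E a edge Hadj Hedge r w).
    unfold dot. rewrite <- fsum_scal, <- fsum_minus. apply fsum_ext. intros i. unfold r. ring. }
  apply functional_extensionality. intros i.
  assert (r i = 0).
  { unfold dot in Hrr. pose proof (fsum_pos_zero N (fun k => r k * r k) (fun k => ltac:(nra)) Hrr i).
    simpl in H. nra. }
  unfold r in H. unfold vscale. fold mu. lra.
Qed.

Lemma edge_equal w : (forall g, Bt B w g = 0) -> forall i k, 0 < a i k -> w i = w k.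
Proof.
  intros Hz i k Hik. destruct Hedge as [H1 [_ H3]]. destruct Hadj as [Hnn Hsym].
  assert (Hg: forall g, w (fst (edge g)) = w (snd (edge g))).
  { intros g. specialize (Hz g). unfold B in Hz. rewrite (Bt_form N E a edge Hedge) in Hz.
    destruct (H1 g) as [_ Hp]. pose proof (sqrt_lt_R0 _ Hp).
    apply Rmult_integral in Hz. destruct Hz; lra. }
  destruct (fin_lt_dec i k) as [L1|L1]; [|destruct (fin_lt_dec k i) as [L2|L2]].
  - destruct (H3 i k L1 Hik) as [g Eg]. specialize (Hg g). rewrite Eg in Hg. auto.
  - rewrite Hsym in Hik. destruct (H3 k i L2 Hik) as [g Eg]. specialize (Hg g). rewrite Eg in Hg. simpl in Hg. auto.
  - rewrite (fin_trich _ _ _ L1 L2). auto.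
Qed.

Lemma mu_nonzero w : Kset w -> Qf w <> 0.
Proof.
  intros [Hw1 Hw2] Hq.
  assert (Hb: forall g, Bt B w g = 0).
  { intros g. pose proof (fsum_pos_zero E (fun g => Bt B w g * Bt B w g) (fun g => ltac:(nra)) Hq g). simpl in H. nra. }
  assert (Hr: forall i j, reach a i j -> w i = w j).
  { intros i j H. induction H. auto. rewrite <- IHreach. apply edge_equal; auto. }
  assert (Hex: exists k, w k <> 0).
  { apply NNPP. intros Hn. assert (dot w w = 0). { unfold dot. apply fsum_zero. intros k.
      destruct (Req_dec (w k) 0). rewrite H; ring. exfalso; apply Hn; eauto. } lra. }
  destruct Hex as [k Hk].
  assert (fsum N w = INR N * w k).
  { rewrite <- fsum_const. apply fsum_ext. intros j. symmetry. apply Hr. apply Hcon. }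
  pose proof (lt_0_INR _ (fin_pos _ k)). rewrite Hw2 in H. nra.
Qed.

Lemma spectral z : fsum N z = 0 -> lam2 * dot z z <= Qf z.
Proof.
  intros Hz. destruct (classic (exists w, Kset w)) as [Hex|Hnex].
  - destruct (min_attained Hex) as [w [Hw Hmin]].
    assert (lam2 <= Qf w).
    { destruct Hlam as [_ [_ H]]. apply H. exists w. split.
      + apply NNPP. intros Hn. destruct Hw as [Hw _]. assert (dot w w = 0).
        { unfold dot. apply fsum_zero. intros k. destruct (Req_dec (w k) 0). rewrite H0; ring. exfalso; apply Hn; eauto. }
        lra.
      + apply is_eig; auto.
      + apply mu_nonzero; auto. }
    pose proof (Qf_lower w Hw Hmin z Hz). pose proof (dot_nonneg N z).
    assert (lam2 * dot z z <= Qf w * dot z z) by (apply Rmult_le_compat_r; auto). lra.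
  - destruct (Req_dec (dot z z) 0) as [E0|E0].
    + rewrite E0. pose proof (Qf_nonneg z). lra.
    + exfalso. apply Hnex. eexists. apply (normalize z Hz E0).
Qed.

End Spec.

Lemma fin_bound {Z : Type} m (F : Fin.t m -> Z -> R) (P : Z -> Prop) :
  (forall k, exists C, forall z, P z -> Rabs (F k z) <= C) ->
  exists C, 0 <= C /\ forall k z, P z -> Rabs (F k z) <= C.
Proof.
  induction m; intros H.
  - exists 0. split. lra. intros k; inversion k.
  - destruct (IHm (fun k => F (Fin.FS k))) as [C1 [H1 HC1]]. intros; apply H.
    destruct (H Fin.F1) as [C0 HC0]. exists (Rmax C1 C0). split.
    eapply Rle_trans; [apply H1|apply Rmax_l].
    intros k. apply (Fin.caseS' k).
    + intros z Hz. eapply Rle_trans; [apply HC0; auto|apply Rmax_r].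
    + intros p0 z Hz. eapply Rle_trans; [apply HC1; auto|apply Rmax_l].
Qed.

Lemma fin_choice {A} m (P : Fin.t m -> A -> Prop) (a0 : A) :
  (forall k, exists x, P k x) -> exists F : Fin.t m -> A, forall k, P k (F k).
Proof.
  intros H. exists (fun k => epsilon (inhabits a0) (P k)). intros k.
  apply epsilon_spec. auto.
Qed.

Lemma norm_vsub_self n (z : vec n) : norm (vsub z z) = 0.
Proof. unfold norm, dot, vsub. rewrite fsum_zero. apply sqrt_0. intros; ring. Qed.

Lemma avg_bound N (w : Fin.t N -> R) C : (0 < N)%nat -> (forall j, Rabs (w j) <= C) ->
  Rabs (/ INR N * fsum N w) <= C.
Proof.
  intros HN H. pose proof (lt_0_INR _ HN). rewrite Rabs_mult. rewrite Rabs_inv, Rabs_right by lra.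
  eapply Rle_trans. apply Rmult_le_compat_l. left; apply Rinv_0_lt_compat; auto.
  eapply Rle_trans. apply fsum_abs. apply fsum_bound. apply H.
  right. field. lra.
Qed.

Lemma pair_sum N (A Bv : Fin.t N -> R) :
  fsum N (fun i => fsum N (fun j => (A i - A j) * (Bv i - Bv j))) =
  2 * INR N * fsum N (fun i => A i * Bv i) - 2 * fsum N A * fsum N Bv.
Proof.
  rewrite (fsum_ext N _ (fun i => (INR N * (A i * Bv i) - A i * fsum N Bv) - (Bv i * fsum N A - fsum N (fun j => A j * Bv j)))).
  - rewrite !fsum_minus, fsum_scal. rewrite fsum_const.
    rewrite (fsum_ext N (fun i => A i * fsum N Bv) (fun i => fsum N Bv * A i)) by (intros; ring).
    rewrite (fsum_ext N (fun i => Bv i * fsum N A) (fun i => fsum N A * Bv i)) by (intros; ring).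
    rewrite !fsum_scal. ring.
  - intros i. rewrite (fsum_ext N _ (fun j => (A i * Bv i - A i * Bv j) - (Bv i * A j - A j * Bv j))) by (intros; ring).
    rewrite !fsum_minus, fsum_const, !fsum_scal. ring.
Qed.

Lemma var_sum N (A : Fin.t N -> R) : (0 < N)%nat ->
  2 * INR N * fsum N (fun i => (A i - / INR N * fsum N A) * (A i - / INR N * fsum N A)) =
  2 * INR N * fsum N (fun i => A i * A i) - 2 * fsum N A * fsum N A.
Proof.
  intros HN. pose proof (lt_0_INR _ HN).
  set (s := fsum N A).
  rewrite (fsum_ext N _ (fun i => A i * A i - 2 * (/ INR N * s) * A i + (/ INR N * s) * (/ INR N * s))) by (intros; ring).
  rewrite fsum_plus, fsum_minus, fsum_scal, fsum_const. fold s. field. lra.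
Qed.

Section Main.
Variables (n q N E : nat)
  (f : vec n -> vec q -> vec n) (h : vec n -> vec q) (sigma : R)
  (a : Fin.t N -> Fin.t N -> R) (edge : Fin.t E -> Fin.t N * Fin.t N)
  (p : Fin.t E -> nat)
  (psi : forall g : Fin.t E, vec (p g) -> vec q -> vec (p g))
  (phi : forall g : Fin.t E, vec (p g) -> vec q -> vec q)
  (Psi : forall g : Fin.t E, vec (p g) -> R)
  (lam2 : R)
  (x : Fin.t N -> R -> vec n)
  (eta : forall g : Fin.t E, R -> vec (p g)).

Definition Bm := incidence a edge.
Definition yy := fun i t => h (x i t).
Definition rr := fun g t => vsum N (fun j => vscale (Bm j g) (yy j t)).
Definition vv := fun g t => phi g (eta g t) (rr g t).
Definition uu := fun i t => vopp (vsum E (fun g => vscale (Bm i g) (vv g t))).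

Variable Dh : vec n -> mat q n.
Hypothesis HDh1 : forall x eps, 0 < eps -> exists del, 0 < del /\
       forall v, norm v < del ->
         norm (vsub (vsub (h (vadd x v)) (h x)) (mvmul (Dh x) v)) <= eps * norm v.
Hypothesis HDh2 : forall x eps, 0 < eps -> exists del, 0 < del /\
       forall z, norm (vsub z x) < del ->
         forall i k, Rabs (Dh z i k - Dh x i k) < eps.
Hypothesis Hx : forall i t, 0 < t -> vderiv (x i) t (f (x i t) (uu i t)).
Hypothesis Heta : forall g t, 0 < t -> vderiv (eta g) t (psi g (eta g t) (rr g t)).

Definition ydot j t k := dot (fun m => Dh (x j t) k m) (f (x j t) (uu j t)).

Lemma y_deriv j t k : 0 < t -> derivable_pt_lim (fun s => yy j s k) t (ydot j t k).
Proof.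
  intros Ht. unfold yy, ydot.
  apply (chain1 n (fun z => h z k) (x j t) (fun m => Dh (x j t) k m) (x j) t); auto.
  intros eps Heps. destruct (HDh1 (x j t) eps Heps) as [del [Hd H]]. exists del. split; auto.
  intros v Hv. specialize (H v Hv). eapply Rle_trans; [|apply H].
  exact (comp_le_norm q (vsub (vsub (h (vadd (x j t) v)) (h (x j t))) (mvmul (Dh (x j t)) v)) k).
Qed.

Lemma rr_deriv g t k : 0 < t ->
  derivable_pt_lim (fun s => rr g s k) t (fsum N (fun j => Bm j g * ydot j t k)).
Proof.
  intros Ht. unfold rr, vsum, vscale.
  apply (fsum_deriv N (fun j s => Bm j g * yy j s k)). intros j.
  apply derivable_pt_lim_scal. apply y_deriv; auto.
Qed.

Lemma rr_cont g t : 0 < t -> vcont_at (rr g) t.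
Proof. intros Ht k. eapply deriv_cont. apply rr_deriv; auto. Qed.

Hypothesis Hadj : sym_nonneg_adj a.
Hypothesis Hcon : connected a.
Hypothesis Hedge : edge_enum a edge.
Hypothesis Hlam : smallest_nonzero_eigenvalue (laplacian a) lam2.
Hypothesis HN : (0 < N)%nat.

Definition ybar t k := / INR N * fsum N (fun j => yy j t k).
Definition Sf t := fsum N (fun i => fsum q (fun k => (yy i t k - ybar t k) * (yy i t k - ybar t k))).

Lemma swap3 n1 n2 n3 (F : Fin.t n1 -> Fin.t n2 -> Fin.t n3 -> R) :
  fsum n1 (fun i => fsum n2 (fun k => fsum n3 (fun g => F i k g))) =
  fsum n3 (fun g => fsum n2 (fun k => fsum n1 (fun i => F i k g))).
Proof.
  rewrite (fsum_ext n1 _ (fun i => fsum n3 (fun g => fsum n2 (fun k => F i k g)))) by (intros; apply fsum_swap).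
  rewrite fsum_swap. apply fsum_ext. intros g. apply fsum_swap.
Qed.

Lemma sum_u t k : fsum N (fun i => uu i t k) = 0.
Proof.
  unfold uu, vopp, vsum, vscale.
  rewrite fsum_opp, fsum_swap.
  rewrite (fsum_zero E). ring. intros g.
  rewrite (fsum_ext N _ (fun i => vv g t k * Bm i g)) by (intros; ring).
  rewrite fsum_scal. unfold Bm. rewrite (colsum N E a edge Hedge). ring.
Qed.

Lemma sum_yu t : fsum N (fun i => dot (yy i t) (uu i t)) = - fsum E (fun g => dot (vv g t) (rr g t)).
Proof.
  unfold dot, uu, rr, vopp, vsum, vscale.
  rewrite <- fsum_opp.
  rewrite (fsum_ext N _ (fun i => fsum q (fun k => fsum E (fun g => - (yy i t k * Bm i g * vv g t k))))).
  2:{ intros i. apply fsum_ext. intros k. rewrite <- fsum_opp, <- fsum_scal. apply fsum_ext. intros; ring. }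
  rewrite swap3. apply fsum_ext. intros g. rewrite <- fsum_opp. apply fsum_ext. intros k.
  rewrite fsum_opp. f_equal. rewrite <- fsum_scal. apply fsum_ext. intros; ring.
Qed.

Lemma sum_yy t : fsum N (fun i => fsum N (fun j => norm (vsub (yy i t) (yy j t)) ^ 2)) = 2 * INR N * Sf t.
Proof.
  rewrite (fsum_ext N _ (fun i => fsum N (fun j => fsum q (fun k => (yy i t k - yy j t k) * (yy i t k - yy j t k))))).
  2:{ intros i. apply fsum_ext. intros j. rewrite norm_sq. reflexivity. }
  rewrite swap3.
  transitivity (fsum q (fun k => 2 * INR N * fsum N (fun i => (yy i t k - ybar t k) * (yy i t k - ybar t k)))).
  - apply fsum_ext; intros k. rewrite fsum_swap. rewrite pair_sum. unfold ybar. rewrite var_sum; auto.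
  - rewrite fsum_scal. f_equal. unfold Sf. apply fsum_swap.
Qed.

Lemma sum_yu2 t : fsum N (fun i => fsum N (fun j => dot (vsub (yy i t) (yy j t)) (vsub (uu i t) (uu j t)))) =
  2 * INR N * fsum N (fun i => dot (yy i t) (uu i t)).
Proof.
  unfold dot at 1. unfold vsub.
  rewrite swap3. rewrite (fsum_ext q _ (fun k => fsum N (fun i => fsum N (fun j => (yy i t k - yy j t k) * (uu i t k - uu j t k))))).
  2:{ intros k. apply fsum_swap. }
  rewrite (fsum_ext q _ (fun k => 2 * INR N * fsum N (fun i => yy i t k * uu i t k))).
  2:{ intros k. rewrite pair_sum. rewrite sum_u. ring. }
  rewrite fsum_scal. f_equal. unfold dot. apply fsum_swap.
Qed.

Lemma sum_rr t : lam2 * Sf t <= fsum E (fun g => dot (rr g t) (rr g t)).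
Proof.
  unfold dot at 1. rewrite fsum_swap.
  unfold Sf. rewrite fsum_swap. rewrite <- fsum_scal. apply fsum_le. intros k.
  set (z := fun j => yy j t k - ybar t k).
  assert (Hz: fsum N z = 0).
  { unfold z. rewrite fsum_minus, fsum_const. unfold ybar. pose proof (lt_0_INR _ HN). field. lra. }
  pose proof (spectral N E a edge lam2 Hadj Hcon Hedge Hlam z Hz).
  unfold dot in H. unfold z in H. eapply Rle_trans; [apply H|].
  unfold Qf. right. apply fsum_ext. intros g.
  assert (Bt (incidence a edge) (fun j => yy j t k - ybar t k) g = rr g t k).
  { transitivity (Bt (incidence a edge) (fun j => yy j t k + (- ybar t k) * (fun _ => 1) j) g).
    { f_equal. apply functional_extensionality. intros; ring. }
    rewrite (Bt_lin N E a edge), (Bt_one N E a edge Hedge). unfold Bt, rr, vsum, vscale, Bm. ring. }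
  rewrite H0. reflexivity.
Qed.

Variables (Phi : vec n -> vec n -> R) (G1 G2 : vec n -> vec n -> vec n).
Hypothesis HC1 : forall x x' eps, 0 < eps -> exists del, 0 < del /\
     forall a b, norm a + norm b < del ->
       Rabs (Phi (vadd x a) (vadd x' b) - Phi x x' - dot (G1 x x') a - dot (G2 x x') b)
         <= eps * (norm a + norm b).
Hypothesis Hineq : forall x x' u u',
       dot (G1 x x') (f x u) + dot (G2 x x') (f x' u')
       <= sigma * (norm (vsub (h x) (h x')) ^ 2)
          + dot (vsub (h x) (h x')) (vsub u u').
Hypothesis Hdiss : forall g, edge_dissipative (psi g) (phi g) (Psi g).

Definition Vf t := fsum N (fun i => fsum N (fun j => Phi (x i t) (x j t))) +
  2 * INR N * fsum E (fun g => Psi g (eta g t)).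

Lemma V_deriv t : 0 < t -> exists D, derivable_pt_lim Vf t D /\
  D <= - (2 * INR N * (lam2 - sigma)) * Sf t.
Proof.
  intros Ht.
  destruct (fin_choice E (fun g D => derivable_pt_lim (fun s => Psi g (eta g s)) t D /\
        D <= - dot (rr g t) (rr g t) + dot (vv g t) (rr g t)) 0) as [Dg HDg].
  { intros g. apply (Hdiss g 0 (t + 1) (eta g) (rr g)).
    - intros s Hs. apply rr_cont. lra.
    - intros s Hs. apply Heta. lra.
    - lra. }
  set (Dij := fun i j => dot (G1 (x i t) (x j t)) (f (x i t) (uu i t)) + dot (G2 (x i t) (x j t)) (f (x j t) (uu j t))).
  exists (fsum N (fun i => fsum N (fun j => Dij i j)) + 2 * INR N * fsum E Dg). split.
  - unfold Vf.
    apply (derivable_pt_lim_plus (fun s => fsum N (fun i => fsum N (fun j => Phi (x i s) (x j s))))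
       (fun s => 2 * INR N * fsum E (fun g => Psi g (eta g s)))).
    + apply (fsum_deriv N (fun i s => fsum N (fun j => Phi (x i s) (x j s)))). intros i.
      apply (fsum_deriv N (fun j s => Phi (x i s) (x j s))). intros j.
      unfold Dij. apply (chain2 n n Phi (x i t) (x j t)); auto.
    + apply (derivable_pt_lim_scal (fun s => fsum E (fun g => Psi g (eta g s)))).
      apply (fsum_deriv E (fun g s => Psi g (eta g s))). intros g. apply HDg.
  - assert (H1: fsum N (fun i => fsum N (fun j => Dij i j)) <=
       fsum N (fun i => fsum N (fun j => sigma * norm (vsub (yy i t) (yy j t)) ^ 2 +
          dot (vsub (yy i t) (yy j t)) (vsub (uu i t) (uu j t))))).
    { apply fsum_le; intros i; apply fsum_le; intros j. unfold Dij, yy. apply Hineq. }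
    rewrite (fsum_ext N (fun i => fsum N (fun j => sigma * norm (vsub (yy i t) (yy j t)) ^ 2 +
          dot (vsub (yy i t) (yy j t)) (vsub (uu i t) (uu j t)))) (fun i => sigma * fsum N (fun j => norm (vsub (yy i t) (yy j t)) ^ 2) +
          fsum N (fun j => dot (vsub (yy i t) (yy j t)) (vsub (uu i t) (uu j t))))) in H1.
    2:{ intros i. cbv beta. rewrite fsum_plus, fsum_scal. reflexivity. }
    rewrite fsum_plus, fsum_scal, sum_yy, sum_yu2, sum_yu in H1.
    assert (H2: fsum E Dg <= fsum E (fun g => - dot (rr g t) (rr g t) + dot (vv g t) (rr g t))).
    { apply fsum_le. intros g. apply HDg. }
    rewrite fsum_plus, fsum_opp in H2.
    pose proof (sum_rr t). pose proof (lt_0_INR _ HN).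
    assert (2 * INR N * fsum E Dg <= 2 * INR N * (- fsum E (fun g => dot (rr g t) (rr g t)) +
          fsum E (fun g => dot (vv g t) (rr g t)))) by (apply Rmult_le_compat_l; lra).
    assert (2 * INR N * (lam2 * Sf t) <= 2 * INR N * fsum E (fun g => dot (rr g t) (rr g t)))
      by (apply Rmult_le_compat_l; lra).
    nra.
Qed.

Hypothesis Hflip : loc_lipschitz2 f.
Hypothesis Hphic : forall g, continuous2 (phi g).
Variable M : R.
Hypothesis HM : forall t, 0 <= t -> (forall i, norm (x i t) <= M) /\ (forall g, norm (eta g t) <= M).

Lemma bound_y : exists Cy, 0 <= Cy /\ forall j t k, 0 <= t -> Rabs (yy j t k) <= Cy.
Proof.
  destruct (fin_bound q (fun k z => h z k) (box n M)) as [C [HC0 HC]].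
  { intros k. apply (bounded_on_box n (fun z => h z k)). intros c.
    destruct (HDh1 c 1 ltac:(lra)) as [del [Hd H]]. exists del. split; auto.
    exists (Rabs (h c k) + fsum n (fun m => Rabs (Dh c k m)) * del + del).
    intros z' Hz'. specialize (H (vsub z' c) Hz'). rewrite vadd_vsub in H.
    pose proof (comp_le_norm q (vsub (vsub (h z') (h c)) (mvmul (Dh c) (vsub z' c))) k) as Hk.
    unfold vsub at 1 in Hk. unfold vsub at 1 in Hk. 
    assert (Hdot: Rabs (mvmul (Dh c) (vsub z' c) k) <= fsum n (fun m => Rabs (Dh c k m)) * del).
    { apply (dot_abs n (fun m => Dh c k m) (vsub z' c) del). intros m.
      pose proof (comp_le_norm n (vsub z' c) m). lra. }
    set (X := mvmul (Dh c) (vsub z' c) k) in *.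
    pose proof (Rabs_triang (h z' k - h c k - X) (h c k + X)).
    replace (h z' k - h c k - X + (h c k + X)) with (h z' k) in H0 by ring.
    pose proof (Rabs_triang (h c k) X). lra. }
  exists C. split; auto. intros j t k Ht. apply HC. apply box_of_norm. apply HM; auto.
Qed.

Lemma fin_bound0 m (F : Fin.t m -> R) : exists C, 0 <= C /\ forall k, Rabs (F k) <= C.
Proof.
  induction m.
  - exists 0. split. lra. intros k; inversion k.
  - destruct (IHm (fun k => F (Fin.FS k))) as [C [H0 H]]. exists (Rmax C (Rabs (F Fin.F1))).
    split. eapply Rle_trans; [apply H0|apply Rmax_l].
    intros k. apply (Fin.caseS' k). apply Rmax_r. intros p0. eapply Rle_trans; [apply H|apply Rmax_l].
Qed.

Lemma bound_B : exists Cb, 0 <= Cb /\ forall j g, Rabs (Bm j g) <= Cb.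
Proof.
  destruct (fin_bound E (fun g j => Bm j g) (fun _ => True)) as [C [HC0 HC]].
  { intros g. destruct (fin_bound0 N (fun j => Bm j g)) as [C [_ HC]]. exists C. intros; auto. }
  exists C. split; [exact HC0|]. intros j g. apply HC. auto.
Qed.

Lemma bound_sum m (w : Fin.t m -> R) (c : Fin.t m -> R) Cb Cw : 0 <= Cb ->
  (forall j, Rabs (c j) <= Cb) -> (forall j, Rabs (w j) <= Cw) ->
  Rabs (fsum m (fun j => c j * w j)) <= INR m * (Cb * Cw).
Proof.
  intros H0 Hc Hw. eapply Rle_trans. apply fsum_abs. apply fsum_bound. intros j.
  rewrite Rabs_mult. apply Rmult_le_compat; auto; apply Rabs_pos.
Qed.

Lemma box_mono m M1 M3 (z : vec m) : M1 <= M3 -> box m M1 z -> box m M3 z.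
Proof. intros H Hz k. specialize (Hz k). lra. Qed.

Lemma bound_v : exists Cv, 0 <= Cv /\ forall g t k, 0 <= t -> Rabs (vv g t k) <= Cv.
Proof.
  destruct bound_y as [Cy [Hy0 Hy]]. destruct bound_B as [Cb [Hb0 Hb]].
  set (M2 := Rmax M (INR N * (Cb * Cy))).
  destruct (fin_bound E (fun g (tk : R * Fin.t q) => vv g (fst tk) (snd tk)) (fun tk => 0 <= fst tk)) as [C [HC0 HC]].
  { intros g.
    destruct (fin_bound q (fun k (zw : vec (p g) * vec q) => phi g (fst zw) (snd zw) k)
        (fun zw => box (p g) M2 (fst zw) /\ box q M2 (snd zw))) as [C [_ HC]].
    { intros k. destruct (bounded_on_box2 (p g) q (fun z w => phi g z w k)) with (M := M2) as [C HC].
      - intros c c'. destruct (Hphic g c c' 1 ltac:(lra)) as [del [Hd H]]. exists del; split; auto.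
        exists (Rabs (phi g c c' k) + 1). intros z' w' Hzw. specialize (H z' w' Hzw).
        pose proof (comp_le_norm q (vsub (phi g z' w') (phi g c c')) k). unfold vsub at 1 in H0.
        pose proof (Rabs_triang (phi g z' w' k - phi g c c' k) (phi g c c' k)).
        replace (phi g z' w' k - phi g c c' k + phi g c c' k) with (phi g z' w' k) in H1 by ring. lra.
      - exists C. intros [z w] [Hz Hw]. apply HC; auto. }
    exists C. intros [t k] Ht. simpl in Ht. simpl. unfold vv. apply (HC k (eta g t, rr g t)). split; simpl.
    - eapply box_mono; [apply Rmax_l|]. apply box_of_norm. apply HM; auto.
    - intros k'. eapply Rle_trans; [|apply Rmax_r]. unfold rr, vsum, vscale.
      apply bound_sum; auto. }
  exists C. split; auto. intros g t k Ht. apply (HC g (t, k)). auto.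
Qed.


Lemma bound_ydot : exists Kd, 0 <= Kd /\ forall j t k, 0 < t -> Rabs (ydot j t k) <= Kd.
Proof.
  destruct bound_v as [Cv [Hv0 Hv]]. destruct bound_B as [Cb [Hb0 Hb]].
  set (Cu := INR E * (Cb * Cv)).
  assert (Hu: forall j t k, 0 <= t -> Rabs (uu j t k) <= Cu).
  { intros j t k Ht. unfold uu, vopp, vsum, vscale. rewrite Rabs_Ropp. apply bound_sum; auto. }
  set (M2 := Rmax M Cu).
  destruct (fin_bound n (fun m (zw : vec n * vec q) => f (fst zw) (snd zw) m)
        (fun zw => box n M2 (fst zw) /\ box q M2 (snd zw))) as [Cf [Hf0 HCf]].
  { intros m. destruct (bounded_on_box2 n q (fun z w => f z w m)) with (M := M2) as [C HC].
    - intros c c'. destruct (Hflip c c') as [r [K [Hr HL]]]. exists r; split; auto.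
      exists (Rabs (f c c' m) + Rabs K * r). intros z' w' Hzw.
      assert (Hcc: norm (vsub c c) + norm (vsub c' c') < r) by (rewrite !norm_vsub_self; lra).
      specialize (HL z' w' c c' Hzw Hcc).
      pose proof (comp_le_norm n (vsub (f z' w') (f c c')) m). unfold vsub at 1 in H.
      pose proof (Rabs_triang (f z' w' m - f c c' m) (f c c' m)).
      replace (f z' w' m - f c c' m + f c c' m) with (f z' w' m) in H0 by ring.
      pose proof (norm_nonneg _ (vsub z' c)). pose proof (norm_nonneg _ (vsub w' c')).
      assert (K * (norm (vsub z' c) + norm (vsub w' c')) <= Rabs K * r).
      { apply Rle_trans with (Rabs K * (norm (vsub z' c) + norm (vsub w' c'))).
        apply Rmult_le_compat_r. lra. apply Rle_abs. apply Rmult_le_compat_l. apply Rabs_pos. lra. }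
      lra.
    - exists C. intros [z w] [Hz Hw]. apply HC; auto. }
  destruct (fin_bound q (fun k (zk : vec n * Fin.t n) => Dh (fst zk) k (snd zk)) (fun zk => box n M (fst zk))) as [Cd [Hd0 HCd]].
  { intros k. destruct (fin_bound n (fun m z => Dh z k m) (box n M)) as [C [_ HC]].
    - intros m. apply (bounded_on_box n (fun z => Dh z k m)). intros c.
      destruct (HDh2 c 1 ltac:(lra)) as [del [Hd H]]. exists del; split; auto.
      exists (Rabs (Dh c k m) + 1). intros z' Hz'. specialize (H z' Hz' k m).
      pose proof (Rabs_triang (Dh z' k m - Dh c k m) (Dh c k m)).
      replace (Dh z' k m - Dh c k m + Dh c k m) with (Dh z' k m) in H0 by ring. lra.
    - exists C. intros [z m] Hz. apply HC. auto. }
  exists (INR n * (Cd * Cf)). split. pose proof (pos_INR n). apply Rmult_le_pos; auto. apply Rmult_le_pos; auto.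
  intros j t k Ht. unfold ydot, dot. apply bound_sum; auto.
  - intros m. apply (HCd k (x j t, m)). apply box_of_norm. apply HM. lra.
  - intros m. apply (HCf m (x j t, uu j t)). split; simpl.
    + eapply box_mono; [apply Rmax_l|]. apply box_of_norm. apply HM. lra.
    + eapply box_mono; [apply Rmax_r|]. intros k'. apply Hu. lra.
Qed.

Definition gi i s := fsum q (fun k => (yy i s k - ybar s k) * (yy i s k - ybar s k)).

Lemma gi_lip i : exists Kg, 0 < Kg /\ forall s1 s2, 0 < s1 -> s1 <= s2 ->
  Rabs (gi i s2 - gi i s1) <= Kg * (s2 - s1).
Proof.
  destruct bound_y as [Cy [Hy0 Hy]]. destruct bound_ydot as [Kd [Hk0 Hk]].
  exists (INR q * (2 * (2 * Kd) * (2 * Cy)) + 1). split.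
  { pose proof (pos_INR q). assert (0 <= INR q * (2 * (2 * Kd) * (2 * Cy))).
    apply Rmult_le_pos; auto. nra. lra. }
  intros s1 s2 H1 H2.
  assert (Hq0: 0 <= INR q * (2 * (2 * Kd) * (2 * Cy))).
  { pose proof (pos_INR q). apply Rmult_le_pos; auto. nra. }
  enough (Hm: Rabs (gi i s2 - gi i s1) <= INR q * (2 * (2 * Kd) * (2 * Cy)) * (s2 - s1)) by nra.
  apply (lip_gen (gi i) 0 s1 s2 (s2 + 1)); try lra.
  intros s Hs.
  set (A := fun k s => yy i s k - ybar s k).
  set (A' := fun k => ydot i s k - / INR N * fsum N (fun j => ydot j s k)).
  exists (fsum q (fun k => A' k * A k s + A k s * A' k)). split.
  - unfold gi. apply (fsum_deriv q (fun k s => (yy i s k - ybar s k) * (yy i s k - ybar s k))).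
    intros k.
    assert (HA: derivable_pt_lim (A k) s (A' k)).
    { unfold A, A', ybar. apply (derivable_pt_lim_minus (fun s => yy i s k) (fun s => / INR N * fsum N (fun j => yy j s k))).
      apply y_deriv; lra.
      apply (derivable_pt_lim_scal (fun s => fsum N (fun j => yy j s k))).
      apply (fsum_deriv N (fun j s => yy j s k)). intros j. apply y_deriv; lra. }
    apply (derivable_pt_lim_mult (A k) (A k)); auto.
  - apply Rle_trans with (INR q * (2 * (2 * Kd) * (2 * Cy))).
    eapply Rle_trans. apply fsum_abs. apply fsum_bound. intros k.
    assert (Ha: Rabs (A k s) <= 2 * Cy).
    { unfold A. unfold Rminus. eapply Rle_trans. apply Rabs_triang. rewrite Rabs_Ropp.
      assert (Rabs (yy i s k) <= Cy) by (apply Hy; lra).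
      assert (Rabs (ybar s k) <= Cy). { unfold ybar. apply avg_bound; auto. intros j. apply Hy. lra. }
      lra. }
    assert (Ha': Rabs (A' k) <= 2 * Kd).
    { unfold A'. unfold Rminus. eapply Rle_trans. apply Rabs_triang. rewrite Rabs_Ropp.
      assert (Rabs (ydot i s k) <= Kd) by (apply Hk; lra).
      assert (Rabs (/ INR N * fsum N (fun j => ydot j s k)) <= Kd). { apply avg_bound; auto. intros j. apply Hk. lra. }
      lra. }
    replace (A' k * A k s + A k s * A' k) with (2 * (A' k * A k s)) by ring.
    rewrite Rabs_mult, Rabs_mult. rewrite (Rabs_right 2) by lra.
    assert (Rabs (A' k) * Rabs (A k s) <= 2 * Kd * (2 * Cy)).
    { apply Rmult_le_compat; auto; apply Rabs_pos. }
    lra. lra.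
Qed.

Hypothesis Hsig : sigma < lam2.
Hypothesis HPhi0 : forall x x', 0 <= Phi x x'.
Hypothesis HPsi : forall g, pos_def (Psi g).

Lemma Psi_nonneg g (z : vec (p g)) : 0 <= Psi g z.
Proof.
  destruct (classic (exists k, z k <> 0)) as [H|H].
  - left. apply HPsi; auto.
  - assert (z = vzero (p g)).
    { apply functional_extensionality. intros k. unfold vzero. apply NNPP. intros Hk. apply H. eauto. }
    subst. destruct (HPsi g) as [H0 _]. lra.
Qed.

Lemma V_nonneg t : 0 <= Vf t.
Proof.
  unfold Vf. pose proof (lt_0_INR _ HN).
  assert (0 <= fsum N (fun i => fsum N (fun j => Phi (x i t) (x j t)))).
  { apply fsum_nonneg; intros; apply fsum_nonneg; intros; apply HPhi0. }
  assert (0 <= fsum E (fun g => Psi g (eta g t))) by (apply fsum_nonneg; intros; apply Psi_nonneg).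
  nra.
Qed.

Lemma gi_nonneg i t : 0 <= gi i t.
Proof. unfold gi. apply fsum_nonneg. intros k. apply Rle_0_sqr. Qed.

Lemma Sf_ge i t : gi i t <= Sf t.
Proof.
  unfold Sf. apply (fsum_ge_term N (fun i => gi i t)). intros i'. apply gi_nonneg.
Qed.


Lemma V_decr s1 s2 : 0 < s1 -> s1 <= s2 -> Vf s2 <= Vf s1.
Proof.
  intros H1 H2. pose proof (decr_gen Vf (s1 / 2) s1 s2 (s2 + 1) 0) as H.
  assert (Vf s2 - Vf s1 <= - 0 * (s2 - s1)).
  { apply H; try lra. intros s Hs. destruct (V_deriv s ltac:(lra)) as [D [HD HD']]. exists D. split; auto.
    pose proof (lt_0_INR _ HN).
    assert (0 <= Sf s). { unfold Sf. apply fsum_nonneg; intros; apply gi_nonneg. }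
    assert (0 <= 2 * INR N * (lam2 - sigma)) by (apply Rmult_le_pos; lra). nra. }
  lra.
Qed.

Lemma conv i eps : 0 < eps -> exists T, forall t, T <= t -> gi i t < eps * eps.
Proof.
  intros Heps. destruct (gi_lip i) as [Kg [HKg Hlip]].
  set (e2 := eps * eps). assert (He2: 0 < e2) by (unfold e2; nra).
  set (del := e2 / (4 * Kg)). assert (Hdel: 0 < del) by (unfold del; apply Rdiv_lt_0_compat; lra).
  assert (HKd: Kg * del = e2 / 4) by (unfold del; field; lra).
  set (c := 2 * INR N * (lam2 - sigma)).
  assert (Hc: 0 < c) by (unfold c; pose proof (lt_0_INR _ HN); apply Rmult_lt_0_compat; lra).
  set (kap := c * (e2 / 2) * del).
  assert (Hk: 0 < kap) by (unfold kap; apply Rmult_lt_0_compat; [apply Rmult_lt_0_compat|]; lra).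
  apply NNPP. intros Hn.
  assert (Hinf: forall T, exists t, T <= t /\ e2 <= gi i t).
  { intros T. apply NNPP. intros Hn2. apply Hn. exists T. intros t Ht.
    destruct (Rlt_or_le (gi i t) e2); auto. exfalso. apply Hn2. eauto. }
  assert (Hdrop: forall t, del < t -> e2 <= gi i t -> Vf (t + del) <= Vf t - kap).
  { intros t Ht Hg.
    assert (Vf (t + del) - Vf t <= - (c * (e2 / 2)) * (t + del - t)).
    { apply (decr_gen Vf (t - del) t (t + del) (t + 2 * del)); try lra.
      intros s Hs. destruct (V_deriv s ltac:(lra)) as [D [HD HD']]. exists D. split; auto.
      assert (e2 / 2 <= gi i s).
      { destruct (Rle_or_lt s t).
        - pose proof (Hlip s t ltac:(lra) H). destruct (abs_le _ _ H0). nra.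
        - pose proof (Hlip t s ltac:(lra) ltac:(lra)). destruct (abs_le _ _ H0). nra. }
      pose proof (Sf_ge i s). fold c in HD'. nra. }
    unfold kap. replace (t + del - t) with del in H by ring. lra. }
  assert (Hind: forall m, exists t, 1 <= t /\ Vf t <= Vf 1 - INR m * kap).
  { induction m.
    - exists 1. simpl. lra.
    - destruct IHm as [t [Ht HV]]. destruct (Hinf (t + del + 1)) as [t' [Ht' Hg]].
      pose proof (V_decr t t' ltac:(lra) ltac:(lra)). pose proof (Hdrop t' ltac:(lra) Hg).
      exists (t' + del). split. lra. rewrite S_INR. lra. }
  destruct (INR_unbounded (Vf 1 / kap)) as [m Hm].
  destruct (Hind m) as [t [_ Ht]]. pose proof (V_nonneg t).
  assert (INR m * kap > Vf 1).
  { apply (Rmult_lt_reg_r (/ kap)). apply Rinv_0_lt_compat; auto.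
    rewrite Rmult_assoc, Rinv_r by lra. unfold Rdiv in Hm. lra. }
  lra.
Qed.

End Main.

Theorem proposition1
  (n q N E : nat)
  (f : vec n -> vec q -> vec n) (h : vec n -> vec q) (sigma : R)
  (a : Fin.t N -> Fin.t N -> R) (edge : Fin.t E -> Fin.t N * Fin.t N)
  (p : Fin.t E -> nat)
  (psi : forall g : Fin.t E, vec (p g) -> vec q -> vec (p g))
  (phi : forall g : Fin.t E, vec (p g) -> vec q -> vec q)
  (Psi : forall g : Fin.t E, vec (p g) -> R)
  (lam2 : R)
  (x : Fin.t N -> R -> vec n)
  (eta : forall g : Fin.t E, R -> vec (p g)) :
  loc_lipschitz2 f ->
  C1_map h ->
  iOFP f h sigma ->
  sym_nonneg_adj a ->
  connected a ->
  edge_enum a edge ->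
  (forall g, loc_lipschitz2 (psi g)) ->
  (forall g, continuous2 (phi g)) ->
  (forall g, pos_def (Psi g)) ->
  (forall g, edge_dissipative (psi g) (phi g) (Psi g)) ->
  smallest_nonzero_eigenvalue (laplacian a) lam2 ->
  sigma < lam2 ->
  let B := incidence a edge in
  let y := fun i t => h (x i t) in
  let rho := fun g t => vsum N (fun j => vscale (B j g) (y j t)) in
  let v := fun g t => phi g (eta g t) (rho g t) in
  let u := fun i t => vopp (vsum E (fun g => vscale (B i g) (v g t))) in
  (forall i t, 0 < t -> vderiv (x i) t (f (x i t) (u i t))) ->
  (forall g t, 0 < t -> vderiv (eta g) t (psi g (eta g t) (rho g t))) ->
  (exists M, forall t, 0 <= t ->
     (forall i, norm (x i t) <= M) /\ (forall g, norm (eta g t) <= M)) ->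
  let ybar := fun t => vscale (/ INR N) (vsum N (fun j => y j t)) in
  forall i, forall eps, 0 < eps -> exists T, forall t, T <= t ->
    norm (vsub (y i t) (ybar t)) < eps.
Proof.
  intros Hf Hh Hiofp Hadj Hcon Hedge _ Hphi HPsi Hdiss Hlam Hsig B y rho v u Hx Heta [M HM] ybar i eps Heps.
  destruct Hh as [Dh [HDh1 HDh2]].
  destruct Hiofp as [Phi [G1 [G2 [alo [ahi [[HC1 _] [HPhi0 [_ [_ [_ Hineq]]]]]]]]]].
  destruct (conv n q N E f h sigma a edge p psi phi Psi lam2 x eta Dh HDh1 HDh2 Hx Heta
     Hadj Hcon Hedge Hlam (fin_pos _ i) Phi G1 G2 HC1 Hineq Hdiss Hf Hphi M HM Hsig HPhi0 HPsi i eps Heps)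
    as [T HT].
  exists T. intros t Ht. specialize (HT t Ht).
  change (sqrt (gi n q N h x i t) < eps).
  rewrite <- (sqrt_square eps) by lra. apply sqrt_lt_1_alt. split; auto.
  apply gi_nonneg.
Qed.
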